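(* Let $P$ be an incompressible spiral path with $k$ turning points, and let $u$ be its internal endpoint. Then any growth process in the connectivity graph model that grows $P$ from a single node starting at $u$ requires $\Omega(k\log k)$ time steps.
   Context: Shapes. Grid points are integer pairs $(x,y)$; two grid points are adjacent if they are at orthogonal (Manhattan) distance $1$. A shape $S=(V,E)$ is a finite connected graph whose nodes occupy distinct grid points and whose edges join only pairs of nodes occupying adjacent points; shapes are considered up to translation. Growth operations. One node, the anchor $u_0$, is stationary; other nodes move relative to it, and a tree is rooted at $u_0$. A growth operation on a node $u$ toward an adjacent grid point $p$ either (i) if $u$ has no edge to $p$, creates a new node $u'$ at $p$ with edge $uu'$; or (ii) if $p$ is occupied by a node $v$ with $uv\in E$, creates a new node $u'$ at $p$, replaces edge $uv$ by edges $uu',u'v$, and translates by one unit, along the axis of $uv$, the part of the tree hanging from whichever of $u,v$ is farther from $u_0$, away from the other endpoint. In one time step a set of operations is applied concurrently, each node receiving at most one operation and all operations having the same cardinal direction; the displacement of each node is the sum of the unit vectors contributed by the operations on its path to $u_0$. The set is collision-free if no two nodes collide during these motions or end at the same point. Growth processes (connectivity graph model). A growth process from an initial shape $S_0$ performs time steps $t=1,2,\dots$, each applying a collision-free set of growth operations to the current shape; no edges are deleted and no edges are created other than by the operations. It grows $S$ from $S_0$ in $t_f$ time steps if the shape obtained after step $t_f$ is $S$. Spirals. For a path, a node is a turning point if it is an endpoint or its two path-neighbors form a right angle at it. A spiral is a path whose turning points, ordered from one endpoint to the other, turn always in the same rotational sense (always clockwise or always counterclockwise). An incompressible spiral with turning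 points $(tp_1,\dots,tp_k)$ from its internal endpoint $tp_1$ to its external endpoint $tp_k$ is a spiral whose segments $s_i$ (between $tp_i$ and $tp_{i+1}$, length $l(s_i)$ in edges) satisfy $l(s_1)=l(s_2)=1$ and $l(s_i)=l(s_{i-2})+1$ for $3\le i\le k-1$. *)

(* Defs.v *)
From Stdlib Require Import Bool ZArith List Reals.
Import ListNotations.
Open Scope Z_scope.

Definition Point := (Z * Z)%type.
Definition padd (p q : Point) : Point := (fst p + fst q, snd p + snd q).
Definition psub (p q : Point) : Point := (fst p - fst q, snd p - snd q).
Definition pscale (a : Z) (p : Point) : Point := (a * fst p, a * snd p).
Definition peqb (p q : Point) : bool := Z.eqb (fst p) (fst q) && Z.eqb (snd p) (snd q).
Definition adjacent (p q : Point) : Prop := Z.abs (fst p - fst q) + Z.abs (snd p - snd q) = 1.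
Definition dot (p q : Point) : Z := fst p * fst q + snd p * snd q.
Definition cross (p q : Point) : Z := fst p * snd q - snd p * fst q.

Inductive dir := East | West | North | South.
Definition dvec (d : dir) : Point :=
  match d with East => (1, 0) | West => (-1, 0) | North => (0, 1) | South => (0, -1) end.

(** Nodes are 0 .. sz-1; node 0 is the initial node, which is the anchor u0.
   Since edges are only created by growth operations, starting from one node the
   shape is always a tree; it is stored rooted at u0 via parent pointers
   ([par x] is the parent of [x <> 0]); the edges are the pairs {x, par x}, 0 < x < sz. *)
Record state := mkState { sz : nat; pos : nat -> Point; par : nat -> nat }.

Definition init_state : state := mkState 1 (fun _ => (0, 0)) (fun _ => 0%nat).

Fixpoint anc_list (pr : nat -> nat) (fuel w : nat) : list nat :=
  match fuel with
  | O => []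
  | S f => if Nat.eqb w 0 then [] else w :: anc_list pr f (pr w)
  end.

Section Step.
Variables (S : state) (d : dir) (o : nat -> bool).
(* [o u = true] : node u receives a growth operation towards pos u + dvec d *)

(** edge {x, par x} is subdivided by the operation of x (its parent lies at pos x + d) *)
Definition up_sub (x : nat) : bool :=
  o x && negb (Nat.eqb x 0) && peqb (pos S (par S x)) (padd (pos S x) (dvec d)).
(** edge {x, par x} is subdivided by the operation of par x (x lies at pos (par x) + d) *)
Definition down_sub (x : nat) : bool :=
  negb (Nat.eqb x 0) && o (par S x) && peqb (pos S x) (padd (pos S (par S x)) (dvec d)).
Definition sub_edge (x : nat) : bool := up_sub x || down_sub x.

(** displacement: sum over the subdivided edges on the path to u0 of the unit vector
    pointing from the endpoint closer to u0 to the farther one (the part hanging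
    from the farther endpoint is translated away from the other endpoint). *)
Definition disp (w : nat) : Point :=
  fold_right padd (0, 0)
    (map (fun x => if sub_edge x then psub (pos S x) (pos S (par S x)) else (0, 0))
         (anc_list (par S) (sz S) w)).

(** the new node created by the operation on u has index newidx u *)
Definition newidx (u : nat) : nat := (sz S + length (filter o (seq 0 u)))%nat.
Definition origin (i : nat) : nat :=
  match find (fun u => o u && Nat.eqb (newidx u) i) (seq 0 (sz S)) with
  | Some u => u | None => 0%nat end.

Definition step_sz : nat := (sz S + length (filter o (seq 0 (sz S))))%nat.

Definition step_pos (i : nat) : Point :=
  if Nat.ltb i (sz S) then padd (pos S i) (disp i)
  else let u := origin i in padd (padd (pos S u) (disp u)) (dvec d).

Definition step_par (i : nat) : nat :=
  if Nat.ltb i (sz S) then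
    (if up_sub i then newidx i
     else if down_sub i then newidx (par S i) else par S i)
  else let u := origin i in if up_sub u then par S u else u.

Definition step : state := mkState step_sz step_pos step_par.

(** collision-freeness: nodes move uniformly along straight lines from their old
    to their new positions during the unit time interval; no two (old) nodes may
    coincide at any time t in [0,1] (t = a/b rational suffices, the data being
    integral), and no two nodes (old or new) may end at the same point. *)
Definition collision_free : Prop :=
  (forall i j, (i < step_sz)%nat -> (j < step_sz)%nat -> i <> j ->
      step_pos i <> step_pos j) /\
  (forall i j, (i < sz S)%nat -> (j < sz S)%nat -> i <> j ->
     forall a b : Z, 0 <= a <= b -> 0 < b ->
       padd (pscale b (pos S i)) (pscale a (disp i)) <>
       padd (pscale b (pos S j)) (pscale a (disp j))).
End Step.

(** A growth process: a list of time steps, each a direction and a set of operated nodes. *)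
Definition gstep := (dir * (nat -> bool))%type.

Fixpoint valid_run (S : state) (steps : list gstep) : Prop :=
  match steps with
  | [] => True
  | (d, o) :: r => collision_free S d o /\ valid_run (step S d o) r
  end.

Fixpoint run (S : state) (steps : list gstep) : state :=
  match steps with
  | [] => S
  | (d, o) :: r => run (step S d o) r
  end.

(** * Paths and spirals. A path shape is given by the sequence of its node positions;
   its edges join consecutive nodes. *)
Definition pt (l : list Point) (i : nat) : Point := nth i l (0, 0).

Definition path_shape (l : list Point) : Prop :=
  NoDup l /\ forall i, (S i < length l)%nat -> adjacent (pt l i) (pt l (S i)).

Definition is_path_edge (l : list Point) (p q : Point) : Prop :=
  exists j, (S j < length l)%nat /\
    ((p = pt l j /\ q = pt l (S j)) \/ (q = pt l j /\ p = pt l (S j))).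

Definition turningb (l : list Point) (i : nat) : bool :=
  Nat.eqb i 0 || Nat.eqb i (length l - 1) ||
  Z.eqb (dot (psub (pt l i) (pt l (i - 1))) (psub (pt l (S i)) (pt l i))) 0.

Definition tps (l : list Point) : list nat := filter (turningb l) (seq 0 (length l)).

Definition turn_sign (l : list Point) (i : nat) : Z :=
  Z.sgn (cross (psub (pt l i) (pt l (i - 1))) (psub (pt l (S i)) (pt l i))).

Definition spiral (l : list Point) : Prop :=
  path_shape l /\
  exists s : Z, (s = 1 \/ s = -1) /\
    forall i, In i (tps l) -> (0 < i < length l - 1)%nat -> turn_sign l i = s.

(** length of segment s_i (1-based), between tp_i and tp_(i+1) *)
Definition seglen (l : list Point) (i : nat) : nat :=
  (nth i (tps l) 0 - nth (i - 1) (tps l) 0)%nat.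

(** [l] is an incompressible spiral listed from its internal endpoint tp_1 = pt l 0
    to its external endpoint tp_k. *)
Definition incompressible_spiral (l : list Point) : Prop :=
  spiral l /\
  let k := length (tps l) in
  (forall i, (1 <= i <= k - 1)%nat ->
     seglen l i = (if Nat.leb i 2 then 1%nat else S (seglen l (i - 2)))).

(** the state [S] is the path shape [l] up to translation, node 0 being at pt l 0 *)
Definition is_shape_from (S : state) (l : list Point) : Prop :=
  exists w : Point,
    sz S = length l /\
    padd (pos S 0) w = pt l 0 /\
    (forall i, (i < sz S)%nat -> In (padd (pos S i) w) l) /\
    (forall q, In q l -> exists i, (i < sz S)%nat /\ padd (pos S i) w = q) /\
    (forall i, (0 < i < sz S)%nat ->
        is_path_edge l (padd (pos S i) w) (padd (pos S (par S i)) w)) /\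
    (forall p q, is_path_edge l p q ->
        exists i, (0 < i < sz S)%nat /\
          ((p = padd (pos S i) w /\ q = padd (pos S (par S i)) w) \/
           (q = padd (pos S i) w /\ p = padd (pos S (par S i)) w))).

Definition grows_from_seed (steps : list gstep) (l : list Point) : Prop :=
  valid_run init_state steps /\ is_shape_from (run init_state steps) l.

(* Main.v *)
From Pilot Require Import Defs.
From Stdlib Require Import ZArith List Reals.
From Stdlib Require Import Bool Lia Lra Arith Classical.
Import ListNotations.
Import Pilot.Defs.
Open Scope nat_scope.

Ltac pt_eq := unfold padd, psub, pscale in *; simpl in *;
  repeat match goal with p : Point |- _ => destruct p end; simpl in *.

Lemma peqb_eq p q : peqb p q = true -> p = q.
Proof. unfold peqb. destruct p, q; simpl. intros H. apply andb_true_iff in H as [H1 H2].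
  apply Z.eqb_eq in H1; apply Z.eqb_eq in H2; subst; auto. Qed.

Lemma iter_zero_stays (f : nat -> nat) n : f 0 = 0 -> Nat.iter n f 0 = 0.
Proof. intros H; induction n; simpl; auto. rewrite IHn; auto. Qed.

Lemma anc_fuel pr n : forall w f1 f2, Nat.iter n pr w = 0 -> n <= f1 -> n <= f2 ->
  anc_list pr f1 w = anc_list pr f2 w.
Proof.
  induction n; intros w f1 f2 H H1 H2.
  - simpl in H; subst. destruct f1, f2; simpl; auto.
  - rewrite Nat.iter_succ_r in H. destruct f1 as [|f1]; [lia|]. destruct f2 as [|f2]; [lia|].
    simpl. destruct (Nat.eqb w 0); auto. f_equal. apply IHn; auto; lia.
Qed.

Definition Inv (S : state) : Prop :=
  0 < sz S /\ par S 0 = 0 /\ (forall x, x < sz S -> par S x < sz S) /\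
  (forall x, x < sz S -> exists n, Nat.iter n (par S) x = 0) /\
  (forall i j, i < sz S -> j < sz S -> pos S i = pos S j -> i = j).

Lemma iter_lt S n x : (forall y, y < sz S -> par S y < sz S) -> x < sz S -> Nat.iter n (par S) x < sz S.
Proof. intros H Hx; induction n; simpl; auto. Qed.

Lemma exists_min (P : nat -> Prop) : (exists n, P n) -> exists n, P n /\ forall m, m < n -> ~ P m.
Proof.
  intros [n Hn]. induction n as [n IH] using lt_wf_ind.
  destruct (classic (exists m, m < n /\ P m)) as [[m [Hm Pm]]|Hno].
  - apply (IH m Hm Pm).
  - exists n; split; auto. intros m Hm Pm; apply Hno; eauto.
Qed.

Lemma nth_map_seq (f : nat -> nat) n i d : i < n -> nth i (map f (seq 0 n)) d = f i.
Proof. intros H. rewrite nth_indep with (d' := f 0) by (rewrite length_map, length_seq; lia).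
  rewrite map_nth, seq_nth by lia. reflexivity. Qed.

Lemma depth_bound S x : Inv S -> x < sz S -> exists n, n < sz S /\ Nat.iter n (par S) x = 0.
Proof.
  intros HI Hx. destruct HI as (Hsz & H0 & Hr & Hc & Hinj).
  destruct (exists_min _ (Hc x Hx)) as [n [Hn Hmin]].
  exists n; split; auto.
  (* the iterates 0..n-1 are distinct nonzero nodes *)
  set (L := map (fun j => Nat.iter j (par S) x) (seq 0 n)).
  assert (ND : NoDup L).
  { unfold L. apply NoDup_nth with (d := 0). rewrite length_map, length_seq.
    intros i j Hi Hj Heq.
    rewrite !nth_map_seq in Heq by lia.
    destruct (Nat.lt_total i j) as [Hij|[Hij|Hij]]; auto; exfalso.
    - apply (Hmin ((n - j) + i)); [lia|].
      rewrite Nat.iter_add, Heq, <- Nat.iter_add. replace (n - j + j) with n by lia. auto.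
    - apply (Hmin ((n - i) + j)); [lia|].
      rewrite Nat.iter_add, <- Heq, <- Nat.iter_add. replace (n - i + i) with n by lia. auto. }
  assert (INC : incl L (seq 1 (sz S - 1))).
  { intros y Hy. unfold L in Hy. apply in_map_iff in Hy as [j [Hj Hj2]].
    apply in_seq in Hj2. subst y. apply in_seq.
    assert (Nat.iter j (par S) x <> 0) by (apply Hmin; lia).
    pose proof (iter_lt S j x Hr Hx). lia. }
  pose proof (NoDup_incl_length ND INC). unfold L in H. rewrite length_map, !length_seq in H. lia.
Qed.

Definition contrib (S : state) (d : dir) (o : nat -> bool) (x : nat) : Point :=
  if sub_edge S d o x then psub (pos S x) (pos S (par S x)) else (0%Z, 0%Z).

Lemma disp_root S d o : disp S d o 0 = (0%Z, 0%Z).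
Proof. unfold disp. destruct (sz S); simpl; auto. Qed.

Lemma disp_rec S d o x : Inv S -> 0 < x < sz S ->
  disp S d o x = padd (contrib S d o x) (disp S d o (par S x)).
Proof.
  intros HI Hx. destruct (depth_bound S x HI ltac:(lia)) as [n [Hn Hit]].
  destruct n as [|n]; [simpl in Hit; lia|].
  unfold disp. remember (sz S) as s. destruct s as [|s]; [lia|].
  simpl. destruct (Nat.eqb_spec x 0); [lia|]. simpl.
  rewrite Nat.iter_succ_r in Hit.
  rewrite (anc_fuel (par S) n (par S x) s (Datatypes.S s)) by (auto; lia). reflexivity.
Qed.

Definition cnt (o : nat -> bool) u := length (filter o (seq 0 u)).

Lemma cnt_S o u : cnt o (Datatypes.S u) = cnt o u + (if o u then 1 else 0).
Proof. unfold cnt. rewrite seq_S, filter_app, length_app. simpl. destruct (o u); simpl; lia. Qed.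

Lemma cnt_mono o u v : u <= v -> cnt o u <= cnt o v.
Proof. induction 1; auto. rewrite cnt_S. lia. Qed.

Lemma cnt_strict o u v : u < v -> o u = true -> cnt o u < cnt o v.
Proof. intros H Ho. pose proof (cnt_mono o (Datatypes.S u) v H). rewrite cnt_S, Ho in H0. lia. Qed.

Lemma cnt_ivt o s v : v < cnt o s -> exists u, u < s /\ o u = true /\ cnt o u = v.
Proof.
  induction s; intros H. unfold cnt in H; simpl in H; lia.
  rewrite cnt_S in H. destruct (Nat.lt_ge_cases v (cnt o s)) as [Hl|Hl].
  - destruct (IHs Hl) as [u [? [? ?]]]. exists u; repeat split; auto; lia.
  - destruct (o s) eqn:E; [|lia]. exists s; repeat split; auto; lia.
Qed.

Section NewIdx.
Variables (G : state) (d : dir) (o : nat -> bool).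

Lemma newidx_eq u : newidx G o u = sz G + cnt o u.
Proof. reflexivity. Qed.

Lemma step_sz_eq : step_sz G o = sz G + cnt o (sz G).
Proof. reflexivity. Qed.

Lemma newidx_inj u v : o u = true -> o v = true -> newidx G o u = newidx G o v -> u = v.
Proof. rewrite !newidx_eq. intros Hu Hv H.
  destruct (Nat.lt_total u v) as [h|[h|h]]; auto.
  - pose proof (cnt_strict o u v h Hu); lia.
  - pose proof (cnt_strict o v u h Hv); lia. Qed.

Lemma newidx_range u : u < sz G -> o u = true -> sz G <= newidx G o u < step_sz G o.
Proof. intros. rewrite newidx_eq, step_sz_eq. pose proof (cnt_strict o u (sz G) H H0). lia. Qed.

Lemma origin_newidx u : u < sz G -> o u = true -> origin G o (newidx G o u) = u.
Proof.
  intros Hu Ho. unfold origin.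
  destruct (find _ _) as [v|] eqn:E.
  - apply find_some in E as [Hin Hv]. apply andb_true_iff in Hv as [Hv1 Hv2].
    apply Nat.eqb_eq in Hv2. apply newidx_inj; auto.
  - exfalso. pose proof (find_none _ _ E u) as C. rewrite in_seq in C.
    specialize (C ltac:(lia)). rewrite Ho, Nat.eqb_refl in C. discriminate.
Qed.

Lemma origin_spec i : sz G <= i < step_sz G o ->
  origin G o i < sz G /\ o (origin G o i) = true /\ newidx G o (origin G o i) = i.
Proof.
  intros Hi. rewrite step_sz_eq in Hi.
  destruct (cnt_ivt o (sz G) (i - sz G) ltac:(lia)) as [u [Hu [Ho Hc]]].
  assert (newidx G o u = i) by (rewrite newidx_eq; lia). subst i.
  rewrite origin_newidx; auto.
Qed.
End NewIdx.

Section StepFacts.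
Variables (G : state) (d : dir) (o : nat -> bool).
Let G' := step G d o.

Lemma sz_step : sz G' = step_sz G o.
Proof. reflexivity. Qed.

Lemma sz_step_ge : sz G <= sz G'.
Proof. rewrite sz_step, step_sz_eq; lia. Qed.

Lemma pos_old i : i < sz G -> pos G' i = padd (pos G i) (disp G d o i).
Proof. intros H. unfold G', step; simpl. unfold step_pos. apply Nat.ltb_lt in H. rewrite H; auto. Qed.

Lemma pos_new i : sz G <= i ->
  pos G' i = padd (padd (pos G (origin G o i)) (disp G d o (origin G o i))) (dvec d).
Proof. intros H. unfold G', step; simpl. unfold step_pos.
  destruct (Nat.ltb_spec i (sz G)); [lia|auto]. Qed.

Lemma par_old i : i < sz G -> par G' i =
  (if up_sub G d o i then newidx G o i else if down_sub G d o i then newidx G o (par G i) else par G i).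
Proof. intros H. unfold G', step; simpl. unfold step_par. apply Nat.ltb_lt in H. rewrite H; auto. Qed.

Lemma par_new i : sz G <= i ->
  par G' i = (if up_sub G d o (origin G o i) then par G (origin G o i) else origin G o i).
Proof. intros H. unfold G', step; simpl. unfold step_par.
  destruct (Nat.ltb_spec i (sz G)); [lia|auto]. Qed.

Lemma up_sub_spec x : up_sub G d o x = true ->
  o x = true /\ x <> 0 /\ pos G (par G x) = padd (pos G x) (dvec d).
Proof. unfold up_sub. intros H. apply andb_true_iff in H as [H H3]. apply andb_true_iff in H as [H1 H2].
  apply negb_true_iff, Nat.eqb_neq in H2. apply peqb_eq in H3. auto. Qed.

Lemma down_sub_spec x : down_sub G d o x = true ->
  x <> 0 /\ o (par G x) = true /\ pos G x = padd (pos G (par G x)) (dvec d).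
Proof. unfold down_sub. intros H. apply andb_true_iff in H as [H H3]. apply andb_true_iff in H as [H1 H2].
  apply negb_true_iff, Nat.eqb_neq in H1. apply peqb_eq in H3. auto. Qed.

Lemma new_par_old i : Inv G -> sz G <= i < sz G' -> par G' i < sz G.
Proof. intros HI Hi. rewrite par_new by lia. rewrite sz_step in Hi.
  destruct (origin_spec G o i Hi) as [Hu _].
  destruct HI as (_&_&Hr&_). destruct up_sub; auto. Qed.

Lemma no_up_down x : Inv G -> 0 < x < sz G -> down_sub G d o x = true -> up_sub G d o (par G x) = false.
Proof.
  intros HI Hx Hd. destruct (up_sub G d o (par G x)) eqn:Hu; auto. exfalso.
  apply down_sub_spec in Hd as (_ & _ & Hd). apply up_sub_spec in Hu as (_ & Hp0 & Hu).
  destruct HI as (Hsz & H0 & Hr & Hc & Hinj).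
  assert (E : par G (par G x) = x).
  { apply Hinj; [apply Hr, Hr; lia | lia | rewrite Hu, Hd; reflexivity]. }
  destruct (Hc x ltac:(lia)) as [n Hn].
  assert (forall m, Nat.iter m (par G) x = x \/ Nat.iter m (par G) x = par G x).
  { induction m; simpl; auto. destruct IHm as [-> | ->]; auto. }
  destruct (H n) as [h|h]; rewrite h in Hn; lia.
Qed.

Lemma par_step_lt x : Inv G -> x < sz G' -> par G' x < sz G'.
Proof.
  intros HI Hx. pose proof sz_step_ge. destruct (Nat.lt_ge_cases x (sz G)) as [h|h].
  - rewrite par_old by auto. destruct HI as (Hsz & H0 & Hr & Hc & Hinj).
    destruct (up_sub G d o x) eqn:Hu.
    + apply up_sub_spec in Hu as [Ho _]. rewrite sz_step. apply newidx_range; auto.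
    + destruct (down_sub G d o x) eqn:Hd.
      * apply down_sub_spec in Hd as [_ [Ho _]]. rewrite sz_step. apply newidx_range; auto.
      * specialize (Hr x h). lia.
  - pose proof (new_par_old x HI ltac:(lia)). lia.
Qed.

Lemma par_old_chain x : Inv G -> 0 < x < sz G -> exists m, Nat.iter m (par G') x = par G x.
Proof.
  intros HI Hx.
  destruct (up_sub G d o x) eqn:Hu.
  - exists 2. change (par G' (par G' x) = par G x). rewrite (par_old x) by lia. rewrite Hu.
    pose proof (up_sub_spec x Hu) as [Ho _].
    rewrite par_new by (pose proof (newidx_range G o x ltac:(lia) Ho); lia).
    rewrite origin_newidx by (auto; lia). rewrite Hu. auto.
  - destruct (down_sub G d o x) eqn:Hd.
    + exists 2. change (par G' (par G' x) = par G x). rewrite (par_old x) by lia. rewrite Hu, Hd.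
      pose proof (down_sub_spec x Hd) as [_ [Ho _]].
      destruct HI as (Hsz & H0 & Hr & Hc & Hinj) eqn:HI'.
      rewrite par_new by (pose proof (newidx_range G o (par G x) (Hr x ltac:(lia)) Ho); lia).
      rewrite origin_newidx by (auto; apply Hr; lia).
      rewrite (no_up_down x HI Hx Hd). auto.
    + exists 1. change (par G' x = par G x). rewrite (par_old x) by lia. rewrite Hu, Hd. auto.
Qed.

Lemma step_Inv : Inv G -> collision_free G d o -> Inv G'.
Proof.
  intros HI [Hcf _]. pose proof sz_step_ge as Hge.
  pose proof HI as (Hsz & H0 & Hr & Hc & Hinj).
  assert (Hp0 : par G' 0 = 0).
  { rewrite par_old by lia. unfold up_sub, down_sub. simpl.
    rewrite !andb_false_r. simpl. auto. }
  assert (Hold : forall x, x < sz G -> exists n, Nat.iter n (par G') x = 0).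
  { intros x Hx. destruct (Hc x Hx) as [n Hn]. revert x Hx Hn.
    induction n; intros x Hx Hn.
    - exists 0; auto.
    - rewrite Nat.iter_succ_r in Hn. destruct (Nat.eq_dec x 0) as [->|hx].
      + exists 0; auto.
      + destruct (IHn (par G x) (Hr x Hx) Hn) as [n' Hn'].
        destruct (par_old_chain x HI ltac:(lia)) as [m Hm].
        exists (n' + m). rewrite Nat.iter_add, Hm. auto. }
  repeat split.
  - lia.
  - auto.
  - intros; apply par_step_lt; auto.
  - intros x Hx. destruct (Nat.lt_ge_cases x (sz G)) as [h|h]; auto.
    destruct (Hold (par G' x) (new_par_old x HI ltac:(lia))) as [n Hn].
    exists (n + 1). rewrite Nat.iter_add. simpl. auto.
  - intros i j Hi Hj Heq. destruct (Nat.eq_dec i j); auto. exfalso.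
    apply (Hcf i j); auto.
Qed.
End StepFacts.

Definition evec (G : state) x := psub (pos G x) (pos G (par G x)).

Definition Rel (G F : state) : Prop :=
  sz G <= sz F /\
  forall x, 0 < x < sz G -> exists m, 0 < m /\
     Nat.iter m (par F) x = par G x /\
     (forall j, 0 < j < m -> sz G <= Nat.iter j (par F) x) /\
     (forall j, j < m -> evec F (Nat.iter j (par F) x) = evec G x).

Lemma Rel_refl G : Rel G G.
Proof. split; auto. intros x Hx. exists 1. repeat split; auto; intros; try lia.
  replace j with 0 by lia. reflexivity. Qed.

Lemma Rel_step G d o : Inv G -> Rel G (step G d o).
Proof.
  intros HI. set (G' := step G d o). split; [apply sz_step_ge|].
  intros x Hx. pose proof HI as (Hsz & H0 & Hr & Hc & Hinj).
  pose proof (disp_rec G d o x HI Hx) as Hdx.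
  assert (Hp : par G x < sz G) by (apply Hr; lia).
  destruct (up_sub G d o x) eqn:Hu.
  - pose proof (up_sub_spec G d o x Hu) as [Ho [_ Hpos]].
    pose proof (newidx_range G o x ltac:(lia) Ho) as Hn.
    assert (Hpx : par G' x = newidx G o x) by (unfold G'; rewrite par_old by lia; rewrite Hu; auto).
    assert (Hpn : par G' (newidx G o x) = par G x)
      by (unfold G'; rewrite par_new by lia; rewrite origin_newidx by (auto; lia); rewrite Hu; auto).
    assert (Hc' : contrib G d o x = psub (pos G x) (pos G (par G x)))
      by (unfold contrib, sub_edge; rewrite Hu; auto).
    exists 2. split; [lia|]. split; [change (par G' (par G' x) = par G x); rewrite Hpx; auto|]. split.
    + intros j Hj. replace j with 1 by lia. change (sz G <= par G' x). rewrite Hpx. lia.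
    + intros j Hj. assert (j = 0 \/ j = 1) as [->| ->] by lia;
      [change (psub (pos G' x) (pos G' (par G' x)) = psub (pos G x) (pos G (par G x)))
      |change (psub (pos G' (par G' x)) (pos G' (par G' (par G' x))) = psub (pos G x) (pos G (par G x)))].
      * rewrite Hpx. unfold G'. rewrite pos_old, pos_new by lia.
        rewrite origin_newidx by (auto; lia). rewrite Hdx, Hc', Hpos. pt_eq. f_equal; lia.
      * rewrite Hpx, Hpn. unfold G'. rewrite pos_new, pos_old by lia.
        rewrite origin_newidx by (auto; lia). rewrite Hdx, Hc', Hpos. pt_eq. f_equal; lia.
  - destruct (down_sub G d o x) eqn:Hd.
    + pose proof (down_sub_spec G d o x Hd) as [_ [Ho Hpos]].
      pose proof (newidx_range G o (par G x) Hp Ho) as Hn.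
      assert (Hpx : par G' x = newidx G o (par G x)) by (unfold G'; rewrite par_old by lia; rewrite Hu, Hd; auto).
      assert (Hpn : par G' (newidx G o (par G x)) = par G x)
        by (unfold G'; rewrite par_new by lia; rewrite origin_newidx by (auto; lia);
            rewrite (no_up_down G d o x HI Hx Hd); auto).
      assert (Hc' : contrib G d o x = psub (pos G x) (pos G (par G x)))
        by (unfold contrib, sub_edge; rewrite Hu, Hd; auto).
      exists 2. split; [lia|]. split; [change (par G' (par G' x) = par G x); rewrite Hpx; auto|]. split.
      * intros j Hj. replace j with 1 by lia. change (sz G <= par G' x). rewrite Hpx. lia.
      * intros j Hj. assert (j = 0 \/ j = 1) as [->| ->] by lia;
      [change (psub (pos G' x) (pos G' (par G' x)) = psub (pos G x) (pos G (par G x)))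
      |change (psub (pos G' (par G' x)) (pos G' (par G' (par G' x))) = psub (pos G x) (pos G (par G x)))].
        -- rewrite Hpx. unfold G'. rewrite pos_old, pos_new by lia.
           rewrite origin_newidx by (auto; lia). rewrite Hdx, Hc', Hpos. pt_eq. f_equal; lia.
        -- rewrite Hpx, Hpn. unfold G'. rewrite pos_new, pos_old by lia.
           rewrite origin_newidx by (auto; lia). rewrite Hpos. pt_eq. f_equal; lia.
    + assert (Hpx : par G' x = par G x) by (unfold G'; rewrite par_old by lia; rewrite Hu, Hd; auto).
      assert (Hc' : contrib G d o x = (0%Z, 0%Z))
        by (unfold contrib, sub_edge; rewrite Hu, Hd; auto).
      exists 1. split; [lia|]. split; [change (par G' x = par G x); auto|]. split; [intros; lia|].
      intros j Hj. replace j with 0 by lia.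
      change (psub (pos G' x) (pos G' (par G' x)) = psub (pos G x) (pos G (par G x))). rewrite Hpx.
      unfold G'. rewrite !pos_old by lia. rewrite Hdx, Hc'. pt_eq. f_equal; lia.
Qed.

Lemma compose (G2 G3 : state) (s1 : nat) (e : Point) :
  Rel G2 G3 -> s1 <= sz G2 ->
  forall m x, (forall j, j < m -> 0 < Nat.iter j (par G2) x < sz G2) ->
    (forall j, 0 < j < m -> s1 <= Nat.iter j (par G2) x) ->
    (forall j, j < m -> evec G2 (Nat.iter j (par G2) x) = e) ->
    exists M, (m = 0 -> M = 0) /\ (0 < m -> 0 < M) /\
      Nat.iter M (par G3) x = Nat.iter m (par G2) x /\
      (forall J, 0 < J < M -> s1 <= Nat.iter J (par G3) x) /\
      (forall J, J < M -> evec G3 (Nat.iter J (par G3) x) = e).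
Proof.
  intros [Hsz23 R23] Hs1. induction m; intros x H1 H2 H3.
  - exists 0. repeat split; intros; try lia.
  - destruct (R23 x (H1 0 ltac:(lia))) as [M0 [HM0 [Hit0 [Hint0 Hev0]]]].
    destruct (IHm (par G2 x)) as [M' [HM'0 [HM'p [Hit' [Hint' Hev']]]]].
    + intros j Hj. rewrite <- Nat.iter_succ_r. apply H1; lia.
    + intros j Hj. rewrite <- Nat.iter_succ_r. apply H2; lia.
    + intros j Hj. rewrite <- Nat.iter_succ_r. apply H3; lia.
    + exists (M' + M0). repeat split; try lia.
      * rewrite Nat.iter_add, Hit0, Hit', Nat.iter_succ_r. auto.
      * intros J HJ. destruct (Nat.lt_total J M0) as [h|[h|h]].
        -- specialize (Hint0 J ltac:(lia)). lia.
        -- subst J. rewrite Hit0. destruct m.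
           ++ rewrite HM'0 in HJ by auto. lia.
           ++ specialize (H2 1 ltac:(lia)). simpl in H2. auto.
        -- replace J with ((J - M0) + M0) by lia. rewrite Nat.iter_add, Hit0. apply Hint'. lia.
      * intros J HJ. destruct (Nat.lt_ge_cases J M0) as [h|h].
        -- rewrite Hev0 by auto. apply (H3 0). lia.
        -- replace J with ((J - M0) + M0) by lia. rewrite Nat.iter_add, Hit0. apply Hev'. lia.
Qed.

Lemma Rel_trans G1 G2 G3 : Inv G2 -> Rel G1 G2 -> Rel G2 G3 -> Rel G1 G3.
Proof.
  intros HI2 [H12 R12] R23. pose proof R23 as [H23 _]. split; [lia|].
  intros x Hx. destruct (R12 x Hx) as [m [Hm [Hit [Hint Hev]]]].
  destruct HI2 as (_ & _ & Hr2 & _).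
  destruct (compose G2 G3 (sz G1) (evec G1 x) R23 H12 m x) as [M [_ [HM [HitM [HintM HevM]]]]].
  - intros j Hj. split.
    + destruct j; [simpl; lia|]. specialize (Hint (Datatypes.S j) ltac:(lia)). lia.
    + apply iter_lt; auto; lia.
  - auto.
  - auto.
  - exists M. repeat split; auto. rewrite HitM; auto.
Qed.

Lemma run_rel G steps : Inv G -> valid_run G steps ->
  Inv (run G steps) /\ Rel G (run G steps).
Proof.
  revert G; induction steps as [|[d o] r IH]; intros G HI Hv.
  - simpl. split; auto. apply Rel_refl.
  - simpl in Hv |- *. destruct Hv as [Hcf Hv].
    pose proof (step_Inv G d o HI Hcf) as HI'.
    destruct (IH _ HI' Hv) as [HIF HRF]. split; auto.
    apply Rel_trans with (step G d o); auto. apply Rel_step; auto.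
Qed.

Lemma Inv_init : Inv init_state.
Proof. unfold Inv; simpl. split; [lia|]. split; [auto|]. split; [intros; lia|]. split.
  - intros x Hx. exists 0. simpl. lia.
  - intros; lia. Qed.

Fixpoint idxof (p : Point) (l : list Point) : nat :=
  match l with [] => 0 | q :: r => if peqb q p then 0 else Datatypes.S (idxof p r) end.

Lemma peqb_refl p : peqb p p = true.
Proof. destruct p; unfold peqb; simpl; rewrite !Z.eqb_refl; auto. Qed.

Lemma peqb_false p q : peqb p q = false -> p <> q.
Proof. intros H E; subst; rewrite peqb_refl in H; discriminate. Qed.

Lemma idxof_spec p l : In p l -> idxof p l < length l /\ nth (idxof p l) l (0%Z,0%Z) = p.
Proof.
  induction l as [|q r IH]; simpl; [tauto|]. intros H.
  destruct (peqb q p) eqn:E.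
  - apply peqb_eq in E; subst; split; auto; lia.
  - apply peqb_false in E. destruct H as [H|H]; [congruence|]. destruct (IH H); split; auto; lia.
Qed.

Lemma idxof_nth l j : NoDup l -> j < length l -> idxof (nth j l (0%Z,0%Z)) l = j.
Proof.
  intros ND Hj. set (p := nth j l _).
  assert (Hin : In p l) by (apply nth_In; auto).
  destruct (idxof_spec p l Hin) as [H1 H2].
  apply (proj1 (NoDup_nth l (0%Z,0%Z)) ND); auto.
Qed.

Definition dirv (l : list Point) (j : nat) : Point := psub (pt l j) (pt l (j - 1)).


Definition rot (v : Point) : Point := (- snd v, fst v)%Z.
Definition pneg (v : Point) : Point := (- fst v, - snd v)%Z.
Definition rs (s : Z) (v : Point) : Point := if Z.eqb s 1 then rot v else pneg (rot v).

Lemma unit_cases a b : (Z.abs a + Z.abs b = 1)%Z ->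
  (a = 1 /\ b = 0 \/ a = -1 /\ b = 0 \/ a = 0 /\ b = 1 \/ a = 0 /\ b = -1)%Z.
Proof. intros; lia. Qed.

Lemma turn_vec a1 a2 b1 b2 s : (Z.abs a1 + Z.abs a2 = 1)%Z -> (Z.abs b1 + Z.abs b2 = 1)%Z ->
  (a1 * b1 + a2 * b2 = 0)%Z -> Z.sgn (a1 * b2 - a2 * b1) = s -> (b1, b2) = rs s (a1, a2).
Proof.
  intros Ha Hb Hd Hs. apply unit_cases in Ha. apply unit_cases in Hb.
  destruct Ha as [[-> ->]|[[-> ->]|[[-> ->]|[-> ->]]]];
  destruct Hb as [[-> ->]|[[-> ->]|[[-> ->]|[-> ->]]]]; simpl in *; try lia; subst s; reflexivity.
Qed.

Lemma straight_vec a1 a2 b1 b2 : (Z.abs a1 + Z.abs a2 = 1)%Z -> (Z.abs b1 + Z.abs b2 = 1)%Z ->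
  (a1 * b1 + a2 * b2 <> 0)%Z -> (b1, b2) = (a1, a2) \/ (b1, b2) = pneg (a1, a2).
Proof.
  intros Ha Hb Hd. apply unit_cases in Ha. apply unit_cases in Hb.
  destruct Ha as [[-> ->]|[[-> ->]|[[-> ->]|[-> ->]]]];
  destruct Hb as [[-> ->]|[[-> ->]|[[-> ->]|[-> ->]]]]; simpl in *; try lia; auto.
Qed.

Lemma rs_rs s v : (s = 1 \/ s = -1)%Z -> rs s (rs s v) = pneg v.
Proof. intros [-> | ->]; destruct v; unfold rs, rot, pneg; simpl; f_equal; lia. Qed.

Section Final.
Variables (F : state) (l : list Point) (w : Point).
Hypothesis HIF : Inv F.
Hypothesis Hpath : path_shape l.
Hypothesis HszF : sz F = length l.
Hypothesis Hw0 : padd (pos F 0) w = pt l 0.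
Hypothesis HwIn : forall i, i < sz F -> In (padd (pos F i) w) l.
Hypothesis HwSurj : forall q, In q l -> exists i, i < sz F /\ padd (pos F i) w = q.
Hypothesis HwEdge : forall p q, is_path_edge l p q ->
        exists i, 0 < i < sz F /\
          ((p = padd (pos F i) w /\ q = padd (pos F (par F i)) w) \/
           (q = padd (pos F i) w /\ p = padd (pos F (par F i)) w)).

Definition PP x := padd (pos F x) w.
Definition idx x := idxof (PP x) l.
Let N := length l.

Lemma idx_lt x : x < N -> idx x < N.
Proof. intros H. apply idxof_spec, HwIn. lia. Qed.

Lemma pt_idx x : x < N -> pt l (idx x) = PP x.
Proof. intros H. apply idxof_spec, HwIn. lia. Qed.

Lemma PP_inj x y : x < N -> y < N -> PP x = PP y -> x = y.
Proof. intros Hx Hy H. destruct HIF as (_&_&_&_&Hinj). apply Hinj; try lia.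
  unfold PP in H. destruct (pos F x), (pos F y), w. unfold padd in H; simpl in H.
  inversion H. f_equal; lia. Qed.

Lemma idx_inj x y : x < N -> y < N -> idx x = idx y -> x = y.
Proof. intros Hx Hy H. apply PP_inj; auto. rewrite <- !pt_idx by auto. rewrite H; auto. Qed.

Lemma idx_nth j x : j < N -> x < N -> PP x = pt l j -> idx x = j.
Proof. intros Hj Hx H. unfold idx. rewrite H. apply idxof_nth; auto. apply Hpath. Qed.

Lemma idx0 : idx 0 = 0.
Proof. destruct HIF as (Hsz&_). apply idx_nth; unfold N; try lia. apply Hw0. Qed.

Lemma idx_pos x : 0 < x < N -> 0 < idx x.
Proof. intros H. destruct (Nat.eq_dec (idx x) 0) as [E|E]; [|lia].
  rewrite <- idx0 in E. apply idx_inj in E; try lia. Qed.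

Lemma idx_surj j : j < N -> exists x, x < N /\ idx x = j.
Proof. intros Hj. destruct (HwSurj (pt l j)) as [x [Hx Hx2]]. apply nth_In; auto.
  exists x; split; [lia|]. apply idx_nth; auto; lia. Qed.

Lemma idx_par_aux : forall j x, x < N -> idx x = j -> 0 < j -> idx (par F x) = j - 1.
Proof.
  pose proof HIF as (Hsz & H0 & Hr & Hc & Hinj).
  induction j; intros x Hx Hix Hj; [lia|].
  assert (Hj1 : Datatypes.S j < N) by (rewrite <- Hix; apply idx_lt; auto).
  destruct (HwEdge (pt l j) (pt l (Datatypes.S j))) as [i [Hi [[E1 E2]|[E1 E2]]]].
  - exists j. split; auto.
  -
    assert (Hpi : par F i = x).
    { apply PP_inj; [unfold N; rewrite <- HszF; apply Hr; lia | auto | ].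
      unfold PP. rewrite <- E2. change (pt l (Datatypes.S j) = PP x). rewrite <- pt_idx by auto. rewrite Hix; auto. }
    assert (Hii : idx i = j) by (apply idx_nth; try lia; auto).
    destruct j.
    + rewrite <- idx0 in Hii. apply idx_inj in Hii; lia.
    + specialize (IHj i ltac:(lia) Hii ltac:(lia)). rewrite Hpi, Hix in IHj. lia.
  - assert (i = x).
    { apply PP_inj; [unfold N; lia | auto | ].
      unfold PP. rewrite <- E1. change (pt l (Datatypes.S j) = PP x). rewrite <- pt_idx by auto. rewrite Hix; auto. }
    subst i. replace (Datatypes.S j - 1) with j by lia.
    apply idx_nth; [lia | unfold N; rewrite <- HszF; apply Hr; lia | unfold PP; auto].
Qed.

Lemma idx_par x : 0 < x < N -> idx (par F x) = idx x - 1.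
Proof. intros Hx. apply (idx_par_aux (idx x)); auto; [lia|apply idx_pos; auto]. Qed.

Lemma evec_F x : 0 < x < N -> evec F x = dirv l (idx x).
Proof.
  intros Hx. pose proof HIF as (Hsz & H0 & Hr & Hc & Hinj).
  assert (HN : N = sz F) by (unfold N; lia).
  unfold dirv, evec. rewrite <- (idx_par x Hx).
  rewrite (pt_idx x) by lia. rewrite (pt_idx (par F x)) by (rewrite HN; apply Hr; lia).
  unfold PP, padd, psub. destruct (pos F x), (pos F (par F x)), w. simpl. f_equal; lia.
Qed.

Lemma idx_iter x m : x < N -> m <= idx x -> Nat.iter m (par F) x < N /\ idx (Nat.iter m (par F) x) = idx x - m.
Proof.
  pose proof HIF as (Hsz & H0 & Hr & Hc & Hinj).
  assert (HN : N = sz F) by (unfold N; lia).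
  intros Hx. induction m; intros Hm.
  - simpl. split; [exact Hx | lia].
  - destruct IHm as [h1 h2]; [lia|]. change (Nat.iter (Datatypes.S m) (par F) x) with (par F (Nat.iter m (par F) x)). split; [rewrite HN in *; apply Hr; lia|].
    destruct (Nat.eq_dec (Nat.iter m (par F) x) 0) as [E|E].
    + rewrite E, idx0 in h2. lia.
    + rewrite idx_par by lia. lia.
Qed.

Definition presb (G : state) (j : nat) : bool :=
  existsb (fun x => Nat.eqb (idx x) j) (seq 0 (sz G)).

Lemma presb_spec G j : presb G j = true <-> exists x, x < sz G /\ idx x = j.
Proof. unfold presb. rewrite existsb_exists. split.
  - intros [x [H1 H2]]. apply in_seq in H1. apply Nat.eqb_eq in H2. exists x; split; auto; lia.
  - intros [x [H1 H2]]. exists x. split; [apply in_seq; lia| apply Nat.eqb_eq; auto]. Qed.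

Lemma presb_N G j : Rel G F -> presb G j = true -> j < N.
Proof. intros [Hs _] H. apply presb_spec in H as [x [Hx <-]]. apply idx_lt. unfold N; lia. Qed.

Lemma presb_0 G : Inv G -> presb G 0 = true.
Proof. intros HI. apply presb_spec. exists 0. split; [destruct HI; lia| apply idx0]. Qed.

Lemma rel_facts G x : Rel G F -> 0 < x < sz G -> exists m, 1 <= m <= idx x /\
  idx (par G x) = idx x - m /\
  (forall y, y < sz G -> ~ (idx x - m < idx y < idx x)) /\
  (forall j, idx x - m < j <= idx x -> dirv l j = evec G x).
Proof.
  intros [Hs R] Hx. destruct (R x Hx) as [m [Hm [Hit [Hint Hev]]]].
  assert (HxN : x < N) by (unfold N; lia).
  assert (Hmi : m <= idx x).
  { destruct (Nat.le_gt_cases m (idx x)) as [h|h]; auto. exfalso.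
    destruct (idx_iter x (idx x) HxN ltac:(lia)) as [h1 h2].
    replace (idx x - idx x) with 0 in h2 by lia. rewrite <- idx0 in h2.
    apply idx_inj in h2; [|auto|unfold N; destruct HIF; lia].
    pose proof (idx_pos x ltac:(lia)). specialize (Hint (idx x) ltac:(lia)). lia. }
  exists m. repeat split; try lia.
  - rewrite <- Hit. apply idx_iter; auto.
  - intros y Hy [H1 H2]. destruct (idx_iter x (idx x - idx y) HxN ltac:(lia)) as [h1 h2].
    replace (idx x - (idx x - idx y)) with (idx y) in h2 by lia.
    apply idx_inj in h2; auto; [|unfold N; lia].
    specialize (Hint (idx x - idx y) ltac:(lia)). lia.
  - intros j Hj. destruct (idx_iter x (idx x - j) HxN ltac:(lia)) as [h1 h2].
    rewrite <- (Hev (idx x - j)) by lia. rewrite evec_F.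
    + f_equal. rewrite h2. lia.
    + split; auto. destruct (Nat.eq_dec (Nat.iter (idx x - j) (par F) x) 0) as [E|E]; [|lia].
      rewrite E, idx0 in h2. lia.
Qed.

Fixpoint mpb (G : state) (j : nat) : nat :=
  match j with 0 => 0 | Datatypes.S j' => if presb G j' then j' else mpb G j' end.

Lemma mpb_spec G j : presb G 0 = true -> 0 < j ->
  presb G (mpb G j) = true /\ mpb G j < j /\ forall i, mpb G j < i < j -> presb G i = false.
Proof.
  intros H0. induction j; intros Hj; [lia|]. simpl.
  destruct (presb G j) eqn:E.
  - repeat split; auto. intros; lia.
  - destruct j; [rewrite H0 in E; discriminate|].
    destruct IHj as [h1 [h2 h3]]; [lia|]. repeat split; auto.
    intros i Hi. destruct (Nat.eq_dec i (Datatypes.S j)); [subst; auto|]. apply h3; lia.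
Qed.

Lemma par_mpb G x : Inv G -> Rel G F -> 0 < x < sz G -> idx (par G x) = mpb G (idx x).
Proof.
  intros HI HR Hx. destruct (rel_facts G x HR Hx) as [m [Hm [Hp [Hno _]]]].
  pose proof HI as (Hsz & _ & Hr & _).
  destruct (mpb_spec G (idx x) (presb_0 G HI) ltac:(lia)) as [h1 [h2 h3]].
  assert (Hpp : presb G (idx (par G x)) = true) by (apply presb_spec; exists (par G x); split; auto; apply Hr; lia).
  destruct (Nat.lt_total (idx (par G x)) (mpb G (idx x))) as [h|[h|h]]; auto; exfalso.
  - apply presb_spec in h1 as [y [Hy Hy2]]. apply (Hno y Hy). lia.
  - rewrite h3 in Hpp; [discriminate|lia].
Qed.

Fixpoint csum (G : state) (j : nat) : Point :=
  match j with 0 => (0%Z, 0%Z)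
  | Datatypes.S j' => padd (csum G j') (if presb G (Datatypes.S j') then dirv l (Datatypes.S j') else (0%Z,0%Z)) end.

Lemma csum_skip G a b : a <= b -> (forall q, a < q <= b -> presb G q = false) -> csum G b = csum G a.
Proof.
  induction 1 as [|b Hab IHle]; intros Hq; auto. simpl. rewrite Hq by lia. rewrite IHle by (intros; apply Hq; lia).
  unfold padd; destruct (csum G a); simpl; f_equal; lia.
Qed.

Lemma csum_pos G x : Inv G -> Rel G F -> x < sz G -> psub (pos G x) (pos G 0) = csum G (idx x).
Proof.
  intros HI HR. remember (idx x) as j eqn:Ej. revert x Ej.
  induction j as [j IH] using lt_wf_ind. intros x Ej Hx.
  destruct (Nat.eq_dec x 0) as [->|Hx0].
  - rewrite idx0 in Ej. subst j. simpl. unfold psub; destruct (pos G 0); simpl; f_equal; lia.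
  - destruct (rel_facts G x HR ltac:(lia)) as [m [Hm [Hp [Hno Hdir]]]].
    pose proof HI as (Hsz & _ & Hr & _).
    assert (IHp := IH (idx (par G x)) ltac:(lia) (par G x) eq_refl (Hr x Hx)).
    destruct j as [|j]; [lia|]. simpl.
    assert (Hpx : presb G (Datatypes.S j) = true) by (apply presb_spec; exists x; auto).
    rewrite Hpx.
    rewrite (csum_skip G (idx (par G x)) j) in * by (try lia; intros q Hq;
       destruct (presb G q) eqn:E; auto; apply presb_spec in E as [y [Hy Hy2]]; exfalso; apply (Hno y Hy); lia).
    rewrite <- IHp. rewrite Ej, Hdir by lia. unfold evec, psub, padd.
    destruct (pos G x), (pos G (par G x)), (pos G 0). simpl. f_equal; lia.
Qed.

Lemma pres_mono G G' j : sz G <= sz G' -> presb G j = true -> presb G' j = true.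
Proof. intros H P. apply presb_spec in P as [x [? ?]]. apply presb_spec. exists x; split; auto; lia. Qed.

Lemma filt_in (p : nat -> bool) a n j : In j (filter p (seq a n)) <-> a <= j < a + n /\ p j = true.
Proof. rewrite filter_In, in_seq. tauto. Qed.

Lemma filt_lt (p : nat -> bool) n : forall a i j, i < j < length (filter p (seq a n)) ->
  nth i (filter p (seq a n)) 0 < nth j (filter p (seq a n)) 0.
Proof.
  induction n; intros a i j H; simpl in H; [lia|]. simpl in *.
  destruct (p a) eqn:E.
  - simpl in H. destruct i, j; simpl; try lia.
    + assert (Hin : In (nth j (filter p (seq (Datatypes.S a) n)) 0) (filter p (seq (Datatypes.S a) n)))
        by (apply nth_In; lia).
      apply filt_in in Hin. lia.
    + apply IHn; lia.
  - apply IHn; auto.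
Qed.

Lemma filt_le_iff (p : nat -> bool) a n i j : i < length (filter p (seq a n)) -> j < length (filter p (seq a n)) ->
  (nth i (filter p (seq a n)) 0 < nth j (filter p (seq a n)) 0 <-> i < j).
Proof.
  intros Hi Hj. split; intros H.
  - destruct (Nat.lt_total i j) as [h|[h|h]]; auto; [subst; lia|].
    pose proof (filt_lt p n a j i ltac:(lia)). lia.
  - apply filt_lt; lia.
Qed.

Hypothesis Hinc : incompressible_spiral l.
Definition K := length (tps l).
Definition T i := nth i (tps l) 0.
Hypothesis HK2 : 2 <= K.

Lemma tps_eq : tps l = filter (turningb l) (seq 0 N).
Proof. reflexivity. Qed.

Lemma T_lt_iff i j : i < K -> j < K -> (T i < T j <-> i < j).
Proof. intros. unfold T, K in *. rewrite tps_eq in *. apply filt_le_iff; auto. Qed.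

Lemma T_in i : i < K -> T i < N /\ turningb l (T i) = true.
Proof. intros H. unfold T, K in *. assert (Hin : In (nth i (tps l) 0) (tps l)) by (apply nth_In; auto).
  rewrite tps_eq in *. apply filt_in in Hin. split; [lia|tauto]. Qed.

Lemma turning_T j : j < N -> turningb l j = true -> exists i, i < K /\ T i = j.
Proof. intros H1 H2. assert (Hin : In j (tps l)) by (rewrite tps_eq; apply filt_in; split; [lia|auto]).
  apply In_nth with (d := 0) in Hin as [i [Hi Hi2]]. exists i; auto. Qed.

Lemma N_pos : 0 < N.
Proof. destruct (T_in 0 ltac:(lia)). lia. Qed.

Lemma T0 : T 0 = 0.
Proof.
  destruct (turning_T 0 N_pos) as [i [Hi Hi2]]. unfold turningb; simpl; auto.
  destruct i; auto. pose proof (proj2 (T_lt_iff 0 (Datatypes.S i) ltac:(lia) Hi) ltac:(lia)). lia.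
Qed.

Lemma Tlast : T (K - 1) = N - 1.
Proof.
  destruct (turning_T (N-1)) as [i [Hi Hi2]]. pose proof N_pos; lia.
  unfold turningb. rewrite (proj2 (Nat.eqb_eq (N-1) (length l - 1))) by reflexivity. rewrite orb_true_r. simpl; auto.
  destruct (Nat.eq_dec i (K-1)) as [->|h]; auto.
  pose proof (proj2 (T_lt_iff i (K-1) Hi ltac:(lia)) ltac:(lia)). pose proof (T_in (K-1) ltac:(lia)). lia.
Qed.

Lemma T_between i j : i + 1 < K -> T i < j < T (i + 1) -> turningb l j = false.
Proof.
  intros Hi Hj. destruct (turningb l j) eqn:E; auto. exfalso.
  pose proof (T_in (i+1) Hi) as [h _].
  destruct (turning_T j ltac:(lia) E) as [m [Hm <-]].
  destruct Hj as [Hj1 Hj2].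
  apply (T_lt_iff i m) in Hj1; try lia. apply (T_lt_iff m (i+1)) in Hj2; lia.
Qed.

Lemma T_mono i j : i <= j < K -> T i <= T j.
Proof. intros H. destruct (Nat.eq_dec i j) as [->|h]; auto. pose proof (proj2 (T_lt_iff i j ltac:(lia) ltac:(lia)) ltac:(lia)). lia. Qed.

Lemma seg_cover j : 0 < j < N -> exists i, 1 <= i <= K - 1 /\ T (i - 1) < j <= T i.
Proof.
  intros Hj. destruct (exists_min (fun i => i < K /\ j <= T i)) as [i [[Hi1 Hi2] Hmin]].
  - exists (K-1). rewrite Tlast. lia.
  - exists i. destruct i. rewrite T0 in Hi2; lia.
    split; [lia|]. split; auto. destruct (Nat.lt_ge_cases (T (Datatypes.S i - 1)) j) as [h|h]; auto.
    exfalso. apply (Hmin i); [lia|]. split; [lia|]. replace i with (Datatypes.S i - 1) by lia. auto.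
Qed.

Lemma dir_S j : dirv l (Datatypes.S j) = psub (pt l (Datatypes.S j)) (pt l j).
Proof. unfold dirv. f_equal. f_equal. lia. Qed.

Lemma pt_inj a b : a < N -> b < N -> pt l a = pt l b -> a = b.
Proof. intros. destruct Hpath as [ND _]. apply (proj1 (NoDup_nth l (0%Z,0%Z)) ND); auto. Qed.

Lemma dir_unit j : 1 <= j <= N - 1 -> (Z.abs (fst (dirv l j)) + Z.abs (snd (dirv l j)) = 1)%Z.
Proof.
  intros Hj. destruct Hpath as [_ Ha]. specialize (Ha (j - 1) ltac:(unfold N in *; lia)).
  unfold adjacent in Ha. replace (Datatypes.S (j - 1)) with j in Ha by lia.
  unfold dirv, psub. destruct (pt l j), (pt l (j-1)). simpl in *. lia.
Qed.

Lemma dir_straight j : 0 < j < N - 1 -> turningb l j = false -> dirv l (Datatypes.S j) = dirv l j.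
Proof.
  intros Hj Ht. unfold turningb in Ht. apply orb_false_iff in Ht as [_ Ht].
  apply Z.eqb_neq in Ht. fold (dirv l j) in Ht. rewrite <- dir_S in Ht.
  pose proof (dir_unit j ltac:(lia)) as U1. pose proof (dir_unit (Datatypes.S j) ltac:(lia)) as U2.
  destruct (dirv l j) as [a1 a2] eqn:E1, (dirv l (Datatypes.S j)) as [b1 b2] eqn:E2.
  unfold dot in Ht; simpl in *. destruct (straight_vec a1 a2 b1 b2 U1 U2 Ht) as [h|h]; auto.
  exfalso. rewrite dir_S in E2. unfold dirv in E1. unfold pneg in h. simpl in h. inversion h; subst.
  assert (pt l (Datatypes.S j) = pt l (j - 1)).
  { unfold psub in *. destruct (pt l (Datatypes.S j)), (pt l j), (pt l (j-1)). simpl in *.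
    inversion E1; inversion E2. f_equal; lia. }
  apply pt_inj in H; lia.
Qed.

Lemma turn_dir : exists s, (s = 1 \/ s = -1)%Z /\
  forall j, 0 < j < N - 1 -> turningb l j = true -> dirv l (Datatypes.S j) = rs s (dirv l j).
Proof.
  destruct Hinc as [[_ [s [Hs Hts]]] _]. exists s. split; auto.
  intros j Hj Ht. specialize (Hts j). unfold turn_sign in Hts.
  assert (Hin : In j (tps l)) by (rewrite tps_eq; apply filt_in; split; [lia|auto]).
  specialize (Hts Hin ltac:(unfold N in *; lia)).
  unfold turningb in Ht. rewrite (proj2 (Nat.eqb_neq j 0)) in Ht by lia.
  rewrite (proj2 (Nat.eqb_neq j (length l - 1))) in Ht by (unfold N in *; lia). simpl in Ht.
  apply Z.eqb_eq in Ht. fold (dirv l j) in Ht, Hts. rewrite <- dir_S in Ht, Hts.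
  pose proof (dir_unit j ltac:(lia)) as U1. pose proof (dir_unit (Datatypes.S j) ltac:(lia)) as U2.
  destruct (dirv l j) as [a1 a2], (dirv l (Datatypes.S j)) as [b1 b2].
  unfold dot, cross in *; simpl in *. apply turn_vec; auto.
Qed.

Lemma seg_dir i j : 1 <= i <= K - 1 -> T (i - 1) < j <= T i -> dirv l j = dirv l (T i).
Proof.
  intros Hi Hj. remember (T i - j) as r eqn:Er. revert j Hj Er.
  induction r; intros j Hj Er.
  - f_equal; lia.
  - rewrite <- (IHr (Datatypes.S j)) by lia. symmetry. apply dir_straight.
    + pose proof (T_in i ltac:(lia)). pose proof (T_mono i (K-1) ltac:(lia)). rewrite Tlast in *. lia.
    + apply (T_between (i - 1)); [lia|]. replace (i - 1 + 1) with i by lia. lia.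
Qed.

Definition u i := dirv l (T i).
Definition f i := T i - T (i - 1).

Lemma T_pos i : 1 <= i < K -> 0 < T i.
Proof. intros. pose proof (proj2 (T_lt_iff 0 i ltac:(lia) ltac:(lia)) ltac:(lia)). rewrite T0 in *. lia. Qed.

Lemma f_pos i : 1 <= i < K -> 0 < f i.
Proof. intros. unfold f. pose proof (proj2 (T_lt_iff (i-1) i ltac:(lia) ltac:(lia)) ltac:(lia)). lia. Qed.

Lemma u_next s : (s = 1 \/ s = -1)%Z ->
  (forall j, 0 < j < N - 1 -> turningb l j = true -> dirv l (Datatypes.S j) = rs s (dirv l j)) ->
  forall i, 1 <= i -> i + 1 <= K - 1 -> u (i + 1) = rs s (u i).
Proof.
  intros Hs Hturn i Hi1 Hi2. unfold u.
  pose proof (T_in i ltac:(lia)) as [HiN Hti].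
  pose proof (proj2 (T_lt_iff i (K-1) ltac:(lia) ltac:(lia)) ltac:(lia)) as HH. rewrite Tlast in HH.
  pose proof (T_pos i ltac:(lia)).
  rewrite <- (Hturn (T i)); [| lia | exact Hti].
  symmetry. apply seg_dir; [lia|]. replace (i + 1 - 1) with i by lia.
  pose proof (proj2 (T_lt_iff i (i+1) ltac:(lia) ltac:(lia)) ltac:(lia)). lia.
Qed.

Lemma f_rec i : 1 <= i <= K - 1 -> f i = (if Nat.leb i 2 then 1 else Datatypes.S (f (i - 2))).
Proof. intros H. destruct Hinc as [_ Hr]. apply Hr. fold K. lia. Qed.

Lemma f_lb i : 1 <= i <= K - 1 -> i <= 2 * f i.
Proof.
  induction i as [i IH] using lt_wf_ind. intros Hi. rewrite f_rec by lia.
  destruct (Nat.leb_spec i 2); [lia|]. specialize (IH (i - 2) ltac:(lia) ltac:(lia)). lia.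
Qed.

Lemma pt_dir j : 0 < j -> pt l j = padd (pt l (j - 1)) (dirv l j).
Proof. intros. unfold dirv, padd, psub. destruct (pt l j), (pt l (j-1)); simpl; f_equal; lia. Qed.

Lemma pt_seg i r : 1 <= i <= K - 1 -> r <= f i ->
  pt l (T (i - 1) + r) = padd (pt l (T (i - 1))) (pscale (Z.of_nat r) (u i)).
Proof.
  intros Hi. induction r; intros Hr.
  - rewrite Nat.add_0_r. unfold padd, pscale. destruct (pt l (T (i-1))), (u i); simpl; f_equal; lia.
  - rewrite pt_dir by lia. replace (T (i - 1) + Datatypes.S r - 1) with (T (i-1) + r) by lia.
    rewrite IHr by lia. rewrite (seg_dir i (T (i - 1) + Datatypes.S r)). 2: lia. 2: { unfold f in *. lia. } fold (u i).
    rewrite Nat2Z.inj_succ. unfold padd, pscale. destruct (pt l (T (i-1))), (u i); cbn [fst snd]. f_equal; ring.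
Qed.

Lemma rs_neq s v : (s = 1 \/ s = -1)%Z -> (Z.abs (fst v) + Z.abs (snd v) = 1)%Z -> rs s v <> v.
Proof. intros [-> | ->] Hv E; destruct v as [a b]; unfold rs, rot, pneg in E; simpl in *; inversion E; lia. Qed.

Lemma closure G j i : Inv G -> Rel G F -> presb G j = true -> i < K -> T i <= j -> presb G (T i) = true.
Proof.
  intros HI HR. revert j. induction j as [j IH] using lt_wf_ind. intros Hp Hi Hij.
  destruct (Nat.eq_dec (T i) j) as [<-|Hne]; auto.
  destruct (Nat.eq_dec i 0) as [->|Hi0]; [rewrite T0; apply presb_0; auto|].
  pose proof (presb_N G j HR Hp) as HjN.
  apply presb_spec in Hp as [y [Hy Hyj]].
  assert (Hy0 : y <> 0) by (intros ->; rewrite idx0 in Hyj; pose proof (T_pos i); lia).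
  destruct (rel_facts G y HR ltac:(lia)) as [m [Hm [Hpar [Hno Hdir]]]].
  pose proof HI as (Hsz & _ & Hr & _).
  destruct (Nat.le_gt_cases (T i) (idx y - m)) as [h|h].
  - apply (IH (idx (par G y))); try lia. apply presb_spec. exists (par G y); split; auto.
  - exfalso. destruct turn_dir as [s [Hs Hturn]].
    pose proof (T_in i Hi) as [HiN Hti]. pose proof (T_pos i ltac:(lia)).
    assert (E1 : dirv l (T i) = dirv l (Datatypes.S (T i))) by (rewrite !Hdir; auto; lia).
    rewrite Hturn in E1 by (auto; lia).
    apply (rs_neq s (dirv l (T i)) Hs); [apply dir_unit; lia| auto].
Qed.

Definition cseg (G : state) i := length (filter (presb G) (seq (T (i - 1) + 1) (f i))).

Lemma cseg_le G i : cseg G i <= f i.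
Proof. unfold cseg. pose proof (filter_length_le (presb G) (seq (T (i-1) + 1) (f i))). rewrite length_seq in H. auto. Qed.

Lemma cseg_full G i : cseg G i = f i -> forall q, T (i - 1) < q <= T i -> presb G q = true.
Proof.
  intros H0 q Hq. unfold cseg in H0.
  assert (H : length (filter (presb G) (seq (T (i - 1) + 1) (f i))) = length (seq (T (i - 1) + 1) (f i)))
    by (rewrite length_seq; auto).
  apply filter_length_forallb in H. rewrite forallb_forall in H. apply H. apply in_seq. unfold f. lia.
Qed.

Lemma cseg_pos G i : 1 <= i < K -> presb G (T i) = true -> 0 < cseg G i.
Proof.
  intros Hi Hp. unfold cseg. assert (In (T i) (filter (presb G) (seq (T (i - 1) + 1) (f i)))).
  { apply filter_In. split; auto. apply in_seq. pose proof (f_pos i Hi). unfold f in *. lia. }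
  destruct (filter _ _); simpl in *; [tauto|lia].
Qed.

Lemma csum_run G a r v : (forall q, a < q <= a + r -> dirv l q = v) ->
  csum G (a + r) = padd (csum G a) (pscale (Z.of_nat (length (filter (presb G) (seq (a + 1) r)))) v).
Proof.
  induction r; intros Hd.
  - rewrite Nat.add_0_r. simpl. unfold padd, pscale; destruct (csum G a); simpl; f_equal; lia.
  - rewrite Nat.add_succ_r. simpl csum. rewrite IHr by (intros; apply Hd; lia).
    rewrite seq_S, filter_app, length_app. replace (a + 1 + r) with (Datatypes.S (a + r)) by lia.
    simpl filter. rewrite Hd by lia.
    destruct (presb G (Datatypes.S (a + r))); simpl length;
      rewrite ?Nat2Z.inj_add; unfold padd, pscale; destruct (csum G a), v; cbn [fst snd]; f_equal; ring.
Qed.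

Lemma csum_seg G i : 1 <= i <= K - 1 ->
  csum G (T i) = padd (csum G (T (i - 1))) (pscale (Z.of_nat (cseg G i)) (u i)).
Proof.
  intros Hi. pose proof (f_pos i ltac:(lia)). pose proof (T_mono (i-1) i ltac:(lia)).
  replace (T i) with (T (i - 1) + f i) at 1 by (unfold f; lia).
  apply csum_run. intros q Hq. apply seg_dir; auto. unfold f in *; lia.
Qed.

Lemma csum_full G j : (forall q, 0 < q <= j -> presb G q = true) -> csum G j = psub (pt l j) (pt l 0).
Proof.
  induction j; intros H.
  - simpl. unfold psub; destruct (pt l 0); simpl; f_equal; lia.
  - simpl. rewrite H by lia. rewrite IHj by (intros; apply H; lia).
    rewrite dir_S. unfold padd, psub. destruct (pt l j), (pt l 0), (pt l (Datatypes.S j)); simpl; f_equal; lia.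
Qed.

Lemma pt_T j : Datatypes.S j <= K - 1 -> pt l (T (Datatypes.S j)) = padd (pt l (T j)) (pscale (Z.of_nat (f (Datatypes.S j))) (u (Datatypes.S j))).
Proof.
  intros Hj. pose proof (pt_seg (Datatypes.S j) (f (Datatypes.S j)) ltac:(lia) (le_n _)) as H.
  replace (Datatypes.S j - 1) with j in H by lia. rewrite <- H. f_equal.
  pose proof (T_mono j (Datatypes.S j) ltac:(lia)). unfold f. replace (Datatypes.S j - 1) with j by lia. lia.
Qed.

Lemma pt_T2 j j' : j' = Datatypes.S j -> j' <= K - 1 -> pt l (T j') = padd (pt l (T j)) (pscale (Z.of_nat (f j')) (u j')).
Proof. intros ->. apply pt_T. Qed.

Lemma f_rec2 j : 1 <= j -> j + 2 <= K - 1 -> f (j + 2) = Datatypes.S (f j).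
Proof. intros. rewrite f_rec by lia. destruct (Nat.leb_spec (j + 2) 2); [lia|]. f_equal. f_equal. lia. Qed.

Lemma f1 : f 1 = 1.
Proof. rewrite f_rec by lia. reflexivity. Qed.
Lemma f2 : 3 <= K -> f 2 = 1.
Proof. intros. rewrite f_rec by lia. reflexivity. Qed.

Lemma u_pneg s : (s = 1 \/ s = -1)%Z ->
  (forall j, 0 < j < N - 1 -> turningb l j = true -> dirv l (Datatypes.S j) = rs s (dirv l j)) ->
  forall j, 1 <= j -> j + 2 <= K - 1 -> u (j + 2) = pneg (u j).
Proof.
  intros Hs Ht j H1 H2. replace (j + 2) with ((j + 1) + 1) by lia.
  rewrite (u_next s Hs Ht (j+1)) by lia. rewrite (u_next s Hs Ht j) by lia. apply rs_rs; auto.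
Qed.

Lemma T0' : pt l (T 0) = pt l 0.
Proof. rewrite T0; auto. Qed.

Lemma f_rec' j : 1 <= j -> Datatypes.S (Datatypes.S j) <= K - 1 -> f (Datatypes.S (Datatypes.S j)) = Datatypes.S (f j).
Proof. intros. replace (Datatypes.S (Datatypes.S j)) with (j + 2) by lia. apply f_rec2; lia. Qed.

Lemma pneg_pneg v : pneg (pneg v) = v.
Proof. destruct v; unfold pneg; simpl; f_equal; lia. Qed.

Lemma geo G : Inv G -> Rel G F -> forall i, 1 <= i -> i + 1 <= K - 1 ->
  (exists j, presb G j = true /\ T i < j) -> cseg G i = f i.
Proof.
  intros HI HR i. induction i as [i IH] using lt_wf_ind. intros Hi1 Hi2 [j [Hj Hjt]].
  pose proof (presb_N G j HR Hj) as HjN.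
  assert (Hprev : forall q, 0 < q <= T (i - 1) -> presb G q = true).
  { intros q Hq. pose proof (T_in (i-1) ltac:(lia)) as [HTN _].
    destruct (seg_cover q ltac:(lia)) as [i' [Hi' Hq']].
    assert (i' <= i - 1).
    { destruct (Nat.le_gt_cases i' (i-1)) as [h|h]; auto. pose proof (T_mono (i-1) (i'-1) ltac:(lia)). lia. }
    apply (cseg_full G i'); [|lia].
    apply IH; try lia. exists j. split; auto. pose proof (T_mono i' i ltac:(lia)). lia. }
  clear IH.
  destruct (Nat.eq_dec (cseg G i) (f i)) as [E|E]; auto. exfalso.
  pose proof (cseg_le G i) as Hcle.
  assert (Hti : presb G (T i) = true) by (apply (closure G j i); auto; lia).
  pose proof (cseg_pos G i ltac:(lia) Hti) as Hc1.
  destruct (exists_min (fun z => presb G z = true /\ T i < z)) as [z [[Hz1 Hz2] Hmin]]; [exists j; auto|].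
  pose proof (T_lt_iff i (i+1) ltac:(lia) ltac:(lia)) as Hii.
  pose proof (T_lt_iff (i-1) i ltac:(lia) ltac:(lia)) as Hii'.
  assert (Hz3 : z <= T (i + 1)).
  { destruct (Nat.le_gt_cases z (T (i+1))) as [h|h]; auto. exfalso.
    apply (Hmin (T (i+1))); auto. split; [apply (closure G z (i+1)); auto; lia| apply Hii; lia]. }
  assert (Hcz : csum G z = padd (csum G (T i)) (u (i+1))).
  { destruct z as [|z']; [lia|]. simpl csum. rewrite Hz1.
    rewrite (csum_skip G (T i) z'); [| lia | ].
    - f_equal. unfold u. apply (seg_dir (i+1)); [lia|]. replace (i+1-1) with i by lia. lia.
    - intros q Hq. destruct (presb G q) eqn:Eq; auto. exfalso. apply (Hmin q); [lia|split; auto; lia]. }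
  rewrite csum_seg in Hcz by lia.
  rewrite (csum_full G (T (i - 1))) in Hcz by exact Hprev.
  set (c := cseg G i) in *.
  assert (Hb : exists b, b <= T (i - 1) /\ presb G b = true /\ csum G b = csum G z).
  { destruct turn_dir as [s [Hs Hturn]].
    pose proof (u_pneg s Hs Hturn) as Up.
    assert (Up' : forall j, 1 <= j -> Datatypes.S (Datatypes.S j) <= K - 1 ->
               u (Datatypes.S (Datatypes.S j)) = pneg (u j))
      by (intros j0 ? ?; replace (Datatypes.S (Datatypes.S j0)) with (j0 + 2) by lia; apply Up; lia).
    destruct (Nat.le_gt_cases i 2) as [h2|h2].
    { exfalso. rewrite f_rec in Hcle, E by lia. destruct (Nat.leb_spec i 2); lia. }
    destruct (Nat.eq_dec i 3) as [->|h3]; [|destruct (Nat.eq_dec i 4) as [->|h4]].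
    - exists 0. split; [lia|]. split; [apply presb_0; auto|]. rewrite Hcz. simpl (3 - 1). simpl (3 + 1).
      rewrite (f_rec' 1) in Hcle, E by lia. rewrite f1 in *.
      assert (c = 1) by lia. rewrite H.
      rewrite (pt_T 1), (pt_T 0), T0', f1, (f2 ltac:(lia)) by lia.
      rewrite (Up' 1), (Up' 2) by lia.
      simpl csum. change (Z.of_nat 1) with 1%Z. unfold padd, psub, pscale, pneg. destruct (pt l 0), (u 1), (u 2). cbn [fst snd]. f_equal; lia.
    - exists 0. split; [lia|]. split; [apply presb_0; auto|]. rewrite Hcz. simpl (4 - 1). simpl (4 + 1).
      assert (Hf4 : f 4 = 2) by (rewrite (f_rec' 2) by lia; rewrite f2 by lia; reflexivity).
      assert (c = 1) by lia. rewrite H.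
      rewrite (pt_T 2), (pt_T 1), (pt_T 0), T0', f1, (f2 ltac:(lia)) by lia.
      rewrite (f_rec' 1) by lia. rewrite f1.
      rewrite (Up' 3), (Up' 2), (Up' 1) by lia.
      simpl csum. change (Z.of_nat 1) with 1%Z. unfold padd, psub, pscale, pneg. destruct (pt l 0), (u 1), (u 2). cbn [fst snd]. f_equal; lia.
    - assert (Hn : exists n, i = Datatypes.S (Datatypes.S (Datatypes.S (Datatypes.S (Datatypes.S n)))))
        by (exists (i - 5); lia).
      destruct Hn as [n ->].
      set (n1 := Datatypes.S n) in *. set (n2 := Datatypes.S n1) in *. set (n3 := Datatypes.S n2) in *.
      set (n4 := Datatypes.S n3) in *. set (n5 := Datatypes.S n4) in *.
      replace (n5 - 1) with n4 in Hcz, Hprev by (unfold n5; lia).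
      replace (n5 + 1) with (Datatypes.S n5) in Hcz by lia.
      assert (F3 : f n3 = Datatypes.S (f n1)) by (apply f_rec'; unfold n3, n1 in *; lia).
      assert (F4 : f n4 = Datatypes.S (f n2)) by (apply f_rec'; unfold n4, n2, n1 in *; lia).
      assert (F5 : f n5 = Datatypes.S (f n3)) by (apply f_rec'; unfold n5, n3, n2, n1 in *; lia).
      assert (U3 : u n3 = pneg (u n1)) by (apply Up'; unfold n3, n1 in *; lia).
      assert (U4 : u n4 = pneg (u n2)) by (apply Up'; unfold n4, n2, n1 in *; lia).
      assert (U5 : u n5 = pneg (u n3)) by (apply Up'; unfold n5, n3, n2, n1 in *; lia).
      assert (U6 : u (Datatypes.S n5) = pneg (u n4)) by (apply Up'; unfold n5, n4, n3, n2, n1 in *; lia).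
      assert (HK5 : Datatypes.S n5 <= K - 1) by (unfold n5 in *; lia).
      rewrite (pt_T2 n3 n4 eq_refl), (pt_T2 n2 n3 eq_refl), (pt_T2 n1 n2 eq_refl), (pt_T2 n n1 eq_refl) in Hcz
        by (unfold n5, n4, n3, n2, n1 in *; lia).
      rewrite U6, U5, U4, U3, !pneg_pneg in Hcz. rewrite F4, F3 in Hcz.
      assert (Hcf : c <= f n1 + 1) by (rewrite F5, F3 in Hcle, E; lia).
      pose proof (T_mono n n1 ltac:(unfold n5, n4, n3, n2, n1 in *; lia)) as Hm1.
      pose proof (T_mono n1 n4 ltac:(unfold n5, n4, n3, n2, n1 in *; lia)) as Hm2.
      assert (Hfn1 : f n1 = T n1 - T n) by (unfold f, n1; f_equal; f_equal; lia).
      replace (n5 - 1) with n4 by (unfold n5; lia). exists (T n + (c - 1)). split; [lia|].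
      assert (Hpb : forall q, 0 < q <= T n + (c - 1) -> presb G q = true) by (intros; apply Hprev; lia).
      split.
      + destruct (Nat.eq_dec (T n + (c - 1)) 0) as [E0|E0]; [rewrite E0; apply presb_0; auto| apply Hpb; lia].
      + rewrite (csum_full G _ Hpb). rewrite Hcz.
        pose proof (pt_seg n1 (c - 1) ltac:(unfold n5, n4, n3, n2, n1 in *; lia) ltac:(lia)) as Hps.
        replace (n1 - 1) with n in Hps by (unfold n1; lia). rewrite Hps.
        rewrite Nat2Z.inj_sub by lia. rewrite !Nat2Z.inj_succ.
        unfold padd, psub, pscale, pneg. destruct (pt l (T n)), (pt l 0), (u n1), (u n2). cbn [fst snd].
        f_equal; ring.
  }
  destruct Hb as [b [Hb1 [Hb2 Hb3]]].
  apply presb_spec in Hb2 as [yb [Hyb Hyb2]]. apply presb_spec in Hz1 as [yz [Hyz Hyz2]].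
  pose proof (csum_pos G yb HI HR Hyb) as Q1. pose proof (csum_pos G yz HI HR Hyz) as Q2.
  rewrite Hyb2 in Q1. rewrite Hyz2 in Q2. rewrite Hb3, <- Q2 in Q1.
  assert (pos G yb = pos G yz).
  { unfold psub in Q1. destruct (pos G yb), (pos G yz), (pos G 0). simpl in Q1. inversion Q1. f_equal; lia. }
  destruct HI as (_&_&_&_&Hinj). apply Hinj in H; auto. subst. lia.
Qed.

Fixpoint lsum (g : nat -> nat) (L : list nat) : nat :=
  match L with [] => 0 | a :: r => g a + lsum g r end.

Lemma lsum_le g h a b L : (forall i, In i L -> g i <= h i + a i + b i) ->
  lsum g L <= lsum h L + lsum a L + lsum b L.
Proof. induction L; simpl; intros H; auto. pose proof (H a0 (or_introl eq_refl)).
  pose proof (IHL (fun i Hi => H i (or_intror Hi))). lia. Qed.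

Lemma lsum_01 a L : NoDup L -> (forall i, In i L -> a i <= 1) ->
  (forall i j, In i L -> In j L -> a i = 1 -> a j = 1 -> i = j) -> lsum a L <= 1.
Proof.
  induction L as [|x r IH]; simpl; intros ND H1 H2; [lia|]. inversion ND; subst.
  destruct (Nat.eq_dec (a x) 0) as [E|E].
  - rewrite E. apply IH; auto.
  - assert (lsum a r = 0).
    { clear IH. assert (forall i, In i r -> a i = 0).
      { intros i Hi. pose proof (H1 i (or_intror Hi)) as Hai. destruct (Nat.eq_dec (a i) 0); auto.
        exfalso. pose proof (H1 x (or_introl eq_refl)) as Hax.
        assert (i = x) by (apply H2; [right; auto| left; auto| lia | lia]). subst; auto. }
      clear -H. induction r; simpl; auto. rewrite H by (left; auto). rewrite IHr; auto. intros; apply H; right; auto. }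
    specialize (H1 x (or_introl eq_refl)). lia.
Qed.

Definition Phi (G : state) : nat := lsum (fun i => Nat.log2 (cseg G i + 1)) (seq 1 (K - 1)).

Definition segL i := seq (T (i - 1) + 1) (f i).

Lemma in_segL i q : In q (segL i) <-> T (i - 1) < q <= T i /\ T (i - 1) <= T i.
Proof. unfold segL, f. rewrite in_seq. lia. Qed.

Lemma filter_split (p p' : nat -> bool) L : (forall x, p x = true -> p' x = true) ->
  length (filter p' L) = length (filter p L) + length (filter (fun x => p' x && negb (p x)) L).
Proof. intros H. induction L; simpl; auto. destruct (p a) eqn:E1.
  - rewrite (H a E1). simpl. lia.
  - destruct (p' a); simpl; lia. Qed.

Lemma cseg_pos_ex G i : 0 < cseg G i -> exists q, T (i - 1) < q <= T i /\ presb G q = true.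
Proof.
  unfold cseg. destruct (filter (presb G) (seq (T (i - 1) + 1) (f i))) as [|q r] eqn:E; simpl; [lia|].
  intros _. assert (In q (filter (presb G) (seq (T (i - 1) + 1) (f i)))) by (rewrite E; left; auto).
  apply filter_In in H as [H1 H2]. apply in_seq in H1. exists q. unfold f in *. split; auto. lia.
Qed.

Section OneStep.
Variables (G G' : state).
Hypotheses (HI : Inv G) (HI' : Inv G') (HR : Rel G F) (HR' : Rel G' F) (Hle : sz G <= sz G')
  (Hnp : forall x, sz G <= x < sz G' -> par G' x < sz G).

Definition Mx := mpb G' N.

Lemma Mx_spec : presb G' Mx = true /\ forall j, presb G' j = true -> j <= Mx.
Proof.
  destruct (mpb_spec G' N (presb_0 G' HI') N_pos) as [h1 [h2 h3]]. split; auto.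
  intros j Hj. pose proof (presb_N G' j HR' Hj). destruct (Nat.le_gt_cases j Mx); auto.
  unfold Mx in *. rewrite h3 in Hj; [discriminate|lia].
Qed.

Lemma new_in i j : 1 <= i <= K - 1 -> In j (segL i) -> presb G' j = true -> presb G j = false -> j <> Mx ->
  In j (map (mpb G') (filter (presb G) (segL i))).
Proof.
  intros Hi Hj P' P HM. destruct Mx_spec as [HM1 HM2]. specialize (HM2 j P').
  destruct (exists_min (fun y => presb G' y = true /\ j < y)) as [y [[Hy1 Hy2] Hmin]]; [exists Mx; split; auto; lia|].
  pose proof (mpb_spec G' y (presb_0 G' HI') ltac:(lia)) as [m1 [m2 m3]].
  assert (Hmj : mpb G' y = j).
  { destruct (Nat.lt_total (mpb G' y) j) as [h|[h|h]]; auto; exfalso.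
    - rewrite m3 in P'; [discriminate|lia].
    - apply (Hmin (mpb G' y)); [lia|]. split; auto. }
  apply in_map_iff. exists y. split; auto.
  apply presb_spec in Hy1 as [ny [Hny Hny2]].
  assert (Hny0 : ny <> 0) by (intros ->; rewrite idx0 in Hny2; lia).
  pose proof (par_mpb G' ny HI' HR' ltac:(lia)) as Hp. rewrite Hny2, Hmj in Hp.
  assert (Hold : ny < sz G).
  { destruct (Nat.lt_ge_cases ny (sz G)) as [h|h]; auto. exfalso.
    specialize (Hnp ny ltac:(lia)). assert (presb G j = true) by (apply presb_spec; exists (par G' ny); auto).
    congruence. }
  assert (PG : presb G y = true) by (apply presb_spec; exists ny; auto).
  apply filter_In. split; auto. apply in_segL in Hj. apply in_segL. split; [|lia]. split; [lia|].
  destruct (Nat.le_gt_cases y (T i)) as [h|h]; auto. exfalso.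
  assert (PT : presb G (T i) = true) by (apply (closure G y i); auto; lia).
  destruct (Nat.eq_dec j (T i)) as [->|hj]; [congruence|].
  apply (Hmin (T i)); [lia|]. split; [apply (pres_mono G G'); auto| lia].
Qed.

Lemma cseg_step i : 1 <= i <= K - 1 ->
  cseg G' i <= 2 * cseg G i + (if Nat.ltb (T (i - 1)) Mx && Nat.leb Mx (T i) then 1 else 0).
Proof.
  intros Hi. unfold cseg. fold (segL i).
  rewrite (filter_split (presb G) (presb G') (segL i)) by (intros; apply (pres_mono G G'); auto).
  set (nw := filter (fun x => presb G' x && negb (presb G x)) (segL i)).
  assert (ND : NoDup nw) by (apply NoDup_filter, seq_NoDup).
  destruct (Nat.ltb (T (i - 1)) Mx && Nat.leb Mx (T i)) eqn:E.
  - assert (incl nw (Mx :: map (mpb G') (filter (presb G) (segL i)))).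
    { intros j Hj. unfold nw in Hj. apply filter_In in Hj as [Hj1 Hj2]. apply andb_true_iff in Hj2 as [P' P].
      apply negb_true_iff in P. destruct (Nat.eq_dec j Mx) as [->|h]; [left; auto| right; apply new_in; auto]. }
    pose proof (NoDup_incl_length ND H). simpl in H0. rewrite length_map in H0. lia.
  - assert (incl nw (map (mpb G') (filter (presb G) (segL i)))).
    { intros j Hj. unfold nw in Hj. apply filter_In in Hj as [Hj1 Hj2]. apply andb_true_iff in Hj2 as [P' P].
      apply negb_true_iff in P. apply new_in; auto. intros ->. apply in_segL in Hj1.
      apply andb_false_iff in E as [E|E]; [apply Nat.ltb_ge in E| apply Nat.leb_gt in E]; lia. }
    pose proof (NoDup_incl_length ND H). rewrite length_map in H0. lia.
Qed.

Lemma cseg_mono i : cseg G i <= cseg G' i.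
Proof. unfold cseg. rewrite (filter_split (presb G) (presb G')) by (intros; apply (pres_mono G G'); auto). lia. Qed.

Lemma Phi_step : Phi G' <= Phi G + 2.
Proof.
  set (act := fun i => if Nat.ltb 0 (cseg G i) && Nat.ltb (cseg G i) (f i) then 1 else 0).
  set (lst := fun i => if Nat.ltb (T (i - 1)) Mx && Nat.leb Mx (T i) then 1 else 0).
  unfold Phi. eapply Nat.le_trans.
  - apply (lsum_le (fun i => Nat.log2 (cseg G' i + 1)) (fun i => Nat.log2 (cseg G i + 1)) act lst). intros i Hi. apply in_seq in Hi.
    pose proof (cseg_step i ltac:(lia)) as H1. fold (lst i) in H1. pose proof (cseg_mono i) as H2.
    pose proof (cseg_le G' i) as H3. pose proof (cseg_le G i) as H4.
    assert (lst i <= 1) by (unfold lst; destruct (_ && _); lia).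
    unfold act. destruct (Nat.ltb_spec 0 (cseg G i)), (Nat.ltb_spec (cseg G i) (f i)); simpl.
    + assert (Hb2 : cseg G' i + 1 <= 2 * (cseg G i + 1)) by lia.
      pose proof (Nat.log2_le_mono _ _ Hb2) as Hlg. rewrite Nat.log2_double in Hlg by lia. lia.
    + replace (cseg G' i) with (cseg G i) by lia. lia.
    + assert (Hb : cseg G' i <= lst i) by lia. assert (Ha : cseg G i = 0) by lia. rewrite Ha.
      destruct (cseg G' i) as [|[|]]; simpl; try lia; [change (Nat.log2 1) with 0; lia | change (Nat.log2 2) with 1; lia].
    + pose proof (f_pos i ltac:(lia)). lia.
  - assert (lsum act (seq 1 (K - 1)) <= 1).
    { apply lsum_01; [apply seq_NoDup| intros; unfold act; destruct (_ && _); lia|].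
      intros i j Hi Hj Ai Aj. apply in_seq in Hi, Hj.
      unfold act in Ai, Aj. destruct (Nat.ltb_spec 0 (cseg G i)), (Nat.ltb_spec (cseg G i) (f i)); simpl in Ai; try lia.
      destruct (Nat.ltb_spec 0 (cseg G j)), (Nat.ltb_spec (cseg G j) (f j)); simpl in Aj; try lia.
      destruct (Nat.lt_total i j) as [h|[h|h]]; auto; exfalso.
      - destruct (cseg_pos_ex G j ltac:(lia)) as [q [Hq Pq]].
        assert (cseg G i = f i); [|lia]. apply geo; auto; try lia. exists q. split; auto.
        pose proof (T_mono i (j-1) ltac:(lia)). lia.
      - destruct (cseg_pos_ex G i ltac:(lia)) as [q [Hq Pq]].
        assert (cseg G j = f j); [|lia]. apply geo; auto; try lia. exists q. split; auto.
        pose proof (T_mono j (i-1) ltac:(lia)). lia. }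
    assert (lsum lst (seq 1 (K - 1)) <= 1).
    { apply lsum_01; [apply seq_NoDup| intros; unfold lst; destruct (_ && _); lia|].
      intros i j Hi Hj Ai Aj. apply in_seq in Hi, Hj. unfold lst in Ai, Aj.
      destruct (Nat.ltb_spec (T (i - 1)) Mx), (Nat.leb_spec Mx (T i)); simpl in Ai; try lia.
      destruct (Nat.ltb_spec (T (j - 1)) Mx), (Nat.leb_spec Mx (T j)); simpl in Aj; try lia.
      destruct (Nat.lt_total i j) as [h|[h|h]]; auto; exfalso.
      - pose proof (T_mono i (j-1) ltac:(lia)). lia.
      - pose proof (T_mono j (i-1) ltac:(lia)). lia. }
    lia.
Qed.
End OneStep.

Lemma Phi_run steps : forall G, Inv G -> valid_run G steps -> run G steps = F ->
  Phi F <= Phi G + 2 * length steps.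
Proof.
  induction steps as [|[d o] r IH]; intros G HI Hv Hrun.
  - simpl in Hrun. subst. simpl. lia.
  - simpl in Hv, Hrun. destruct Hv as [Hcf Hv].
    set (G' := step G d o) in *.
    pose proof (step_Inv G d o HI Hcf) as HI'.
    pose proof (run_rel G' r HI' Hv) as [_ HR']. rewrite Hrun in HR'.
    assert (HR : Rel G F) by (apply Rel_trans with G'; auto; apply Rel_step; auto).
    pose proof (Phi_step G G' HI HI' HR HR' (sz_step_ge G d o) (fun x Hx => new_par_old G d o x HI Hx)).
    specialize (IH G' HI' Hv Hrun). simpl length. lia.
Qed.

Lemma lsum_ext g h L : (forall i, In i L -> g i = h i) -> lsum g L = lsum h L.
Proof. induction L as [|a L IHL]; simpl; intros H; [reflexivity|]. rewrite (H a (or_introl eq_refl)). f_equal. apply IHL. intros; apply H; right; auto. Qed.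

Lemma filter_none (p : nat -> bool) L : (forall x, In x L -> p x = false) -> filter p L = [].
Proof. induction L; simpl; intros H; auto. rewrite H by auto. apply IHL; auto. Qed.

Lemma filter_all (p : nat -> bool) L : (forall x, In x L -> p x = true) -> filter p L = L.
Proof. induction L; simpl; intros H; auto. rewrite H by auto. f_equal. apply IHL; auto. Qed.

Lemma Phi_init : Phi init_state = 0.
Proof.
  unfold Phi. rewrite (lsum_ext _ (fun _ => 0)).
  - induction (seq 1 (K - 1)); simpl; auto.
  - intros i Hi. apply in_seq in Hi. unfold cseg.
    rewrite filter_none; [reflexivity|].
    intros q Hq. apply in_seq in Hq. destruct (presb init_state q) eqn:E; auto.
    apply presb_spec in E as [x [Hx Hx2]]. simpl in Hx. replace x with 0 in Hx2 by lia.
    rewrite idx0 in Hx2. lia.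
Qed.

Lemma Phi_F : Phi F = lsum (fun i => Nat.log2 (f i + 1)) (seq 1 (K - 1)).
Proof.
  unfold Phi. apply lsum_ext. intros i Hi. apply in_seq in Hi. unfold cseg.
  rewrite filter_all; [rewrite length_seq; auto|].
  intros q Hq. apply in_seq in Hq. apply presb_spec.
  pose proof (T_in i ltac:(lia)) as [HiN _]. unfold f in Hq.
  destruct (idx_surj q ltac:(lia)) as [x [Hx Hx2]]. exists x. split; auto. unfold N in Hx; lia.
Qed.

Lemma main_count steps : valid_run init_state steps -> run init_state steps = F ->
  lsum (fun i => Nat.log2 (f i + 1)) (seq 1 (K - 1)) <= 2 * length steps.
Proof.
  intros Hv Hr. rewrite <- Phi_F. pose proof (Phi_run steps init_state Inv_init Hv Hr).
  rewrite Phi_init in H. lia.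
Qed.

Lemma lsum_app g A B : lsum g (A ++ B) = lsum g A + lsum g B.
Proof. induction A; simpl; auto. rewrite IHA. lia. Qed.

Lemma lsum_ge_const g c L : (forall i, In i L -> c <= g i) -> length L * c <= lsum g L.
Proof. induction L; simpl; intros H; auto. pose proof (H a (or_introl eq_refl)).
  pose proof (IHL (fun i Hi => H i (or_intror Hi))). lia. Qed.

Lemma sum_lb m : 1 <= m -> 4 * m <= K ->
  (K - 2 * m) * Nat.log2 m <= lsum (fun i => Nat.log2 (f i + 1)) (seq 1 (K - 1)).
Proof.
  intros Hm HmK. replace (K - 1) with ((2 * m - 1) + (K - 2 * m)) by lia.
  rewrite seq_app, lsum_app. replace (1 + (2 * m - 1)) with (2 * m) by lia.
  pose proof (lsum_ge_const (fun i => Nat.log2 (f i + 1)) (Nat.log2 m) (seq (2 * m) (K - 2 * m))) as H.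
  rewrite length_seq in H. enough (length (seq (2 * m) (K - 2 * m)) * Nat.log2 m <= lsum (fun i => Nat.log2 (f i + 1)) (seq (2 * m) (K - 2 * m))) by (rewrite length_seq in H0; lia).
  rewrite length_seq. apply H. intros i Hi. apply in_seq in Hi.
  apply Nat.log2_le_mono. pose proof (f_lb i ltac:(lia)). lia.
Qed.
End Final.

Section RealPart.
Local Open Scope R_scope.
Lemma ln_le_mono x y : 0 < x -> x <= y -> ln x <= ln y.
Proof. intros Hx [H|H]; [left; apply ln_increasing; auto| subst; lra]. Qed.

Lemma ln2_lt1 : ln 2 < 1.
Proof.
  assert (H : 2 < exp 1) by (pose proof (exp_ineq1 1 ltac:(lra)); lra).
  rewrite <- (ln_exp 1). apply ln_increasing; lra.
Qed.

Lemma ln2_pos : 0 < ln 2.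
Proof. pose proof ln_lt_2. lra. Qed.

Lemma real_bound (Kn Tn m L : nat) : (3 ^ 8 <= Kn)%nat -> (4 * m <= Kn < 4 * m + 4)%nat ->
  (m < 2 ^ (S L))%nat -> ((Kn - 2 * m) * L <= 2 * Tn)%nat ->
  / 8 * INR Kn * ln (INR Kn) <= INR Tn.
Proof.
  intros HK Hm HL Hs.
  assert (H8 : (8 <= 3 ^ 8)%nat) by (apply Nat.leb_le; vm_compute; reflexivity).
  assert (Hm1 : (1 <= m)%nat) by lia.
  set (k := INR Kn). set (t := INR Tn). set (mm := INR m). set (LL := INR L).
  assert (Hk : 3 ^ 8 <= k) by (unfold k; replace 3 with (INR 3) by (simpl; lra); rewrite <- pow_INR; apply le_INR; auto).
  assert (Hmm1 : 1 <= mm) by (unfold mm; replace 1 with (INR 1) by (simpl; lra); apply le_INR; auto).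
  assert (Hkm : 4 * mm <= k) by (unfold mm, k; replace 4 with (INR 4) by (simpl; lra); rewrite <- mult_INR; apply le_INR; lia).
  assert (Hkm2 : k <= 8 * mm) by (unfold mm, k; replace 8 with (INR 8) by (simpl; lra); rewrite <- mult_INR; apply le_INR; lia).
  assert (Hs' : (k - 2 * mm) * LL <= 2 * t).
  { unfold k, mm, LL, t. replace 2 with (INR 2) by (simpl; lra). rewrite <- !mult_INR, <- minus_INR by lia.
    rewrite <- mult_INR. apply le_INR. auto. }
  assert (HLL : ln mm < LL + 1).
  { assert (h : mm < 2 ^ (S L)).
    { unfold mm. replace 2 with (INR 2) by (simpl; lra). rewrite <- pow_INR. apply lt_INR; auto. }
    apply ln_increasing in h; [|lra]. rewrite ln_pow in h by lra. rewrite S_INR in h. fold LL in h.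
    pose proof ln2_lt1. pose proof ln2_pos. assert (0 <= LL) by (unfold LL; apply pos_INR). nra. }
  assert (Hln8 : ln 8 < 3).
  { replace 8 with (2 ^ 3) by lra. rewrite ln_pow by lra. simpl INR. pose proof ln2_lt1. lra. }
  assert (Hlnm : ln k - ln 8 <= ln mm).
  { assert (ln k <= ln (8 * mm)) by (apply ln_le_mono; lra). rewrite ln_mult in H by lra. lra. }
  assert (Hlnk : 8 <= ln k).
  { assert (ln (3 ^ 8) <= ln k) by (apply ln_le_mono; [apply pow_lt; lra| lra]).
    rewrite ln_pow in H by lra. assert (1 <= ln 3).
    { rewrite <- (ln_exp 1). apply ln_le_mono; [apply exp_pos| apply exp_le_3]. }
    simpl INR in H. lra. }
  assert (HLb : ln k / 2 <= LL) by lra.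
  assert (Hprod : (k / 2) * (ln k / 2) <= (k - 2 * mm) * LL).
  { apply Rmult_le_compat; lra. }
  lra.
Qed.

End RealPart.

Theorem lemma3p4 :
  exists c : R, (c > 0)%R /\
  exists k0 : nat,
  forall (l : list Point) (steps : list gstep),
    incompressible_spiral l ->
    (k0 <= length (tps l))%nat ->
    grows_from_seed steps l ->
    (c * INR (length (tps l)) * ln (INR (length (tps l))) <= INR (length steps))%R.
Proof.
  exists (/ 8)%R. split; [lra|]. exists (3 ^ 8)%nat.
  intros l steps Hinc Hk0 [Hv Hshape].
  assert (H8 : (8 <= 3 ^ 8)%nat) by (apply Nat.leb_le; vm_compute; reflexivity).
  destruct (run_rel init_state steps Inv_init Hv) as [HIF _].
  destruct Hshape as [w (HszF & Hw0 & HwIn & HwSurj & _ & HwEdge)].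
  assert (Hpath : path_shape l) by (destruct Hinc as [[Hp _] _]; exact Hp).
  pose proof (Nat.le_trans _ _ _ H8 Hk0) as Hk8.
  assert (HK2 : 2 <= K l) by (unfold K; lia).
  assert (HK8 : 8 <= K l) by exact Hk8.
  pose proof (main_count _ l w HIF Hpath HszF Hw0 HwIn HwSurj HwEdge Hinc HK2 steps Hv eq_refl) as Hc.
  set (m := K l / 4).
  assert (Hdm : K l = 4 * m + K l mod 4) by (unfold m; apply Nat.div_mod_eq).
  pose proof (Nat.mod_upper_bound (K l) 4 ltac:(lia)) as Hmod.
  assert (Hm1 : 1 <= m) by lia.
  pose proof (sum_lb _ l HszF Hinc HK2 m Hm1 ltac:(lia)) as Hs.
  pose proof (Nat.log2_spec m ltac:(lia)) as [_ HL].
  apply (real_bound (length (tps l)) (length steps) m (Nat.log2 m)).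
  - exact Hk0.
  - unfold K in Hdm, Hmod. lia.
  - auto.
  - unfold K in Hs, Hc. lia.
Qed.
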